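(* Let $\succ$ be a binary relation on $\mathcal{F}$. Then $\succ$ satisfies Axioms A1, A2, A3, A5, A6, A7 below if and only if there exist a non-constant affine function $u:X\to\mathbb{R}$, unique up to positive affine transformation, and a unique pair of monotonic constant-linear functionals $I_p,I_o:B_0(\Sigma)\to\mathbb{R}$ with $I_p(u(h))\le I_o(u(h))$ for all $h\in\mathcal{F}$, such that for all $f,g\in\mathcal{F}$, $$f\succ g\iff\begin{cases}I_p(u(f))>I_p(u(g)),\\ I_o(u(f))>I_o(u(g)).\end{cases}$$ Axioms: (A1) $\succ$ is asymmetric and transitive, and its restriction to $X$ is non-trivial and negatively transitive. (A2) For all $f,g,h\in\mathcal{F}$, $\{\alpha\in[0,1]:\alpha f+(1-\alpha)g\succ h\}$ and $\{\alpha\in[0,1]:h\succ\alpha f+(1-\alpha)g\}$ are open in $[0,1]$. (A3) For all $f,g\in\mathcal{F}$, $x\in X$, $\alpha\in(0,1)$: $f\succ g$ iff $\alpha f+(1-\alpha)x\succ\alpha g+(1-\alpha)x$. (A5) If $f(s)\succ g(s)$ for all $s\in S$ then $f\succ g$. (A6) If for all $x\in X$, $f\Join x$ implies $g\Join x$, then $f\Join g$. (A7) If $f\Join x$, $x\succ g$, $g\Join y$, $f\succ y$ (with $x,y\in X$), then $f\succ g$.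
   Context: $S$ is a set of states with algebra $\Sigma$; $X$ is a non-singleton convex subset of a real vector space; $\mathcal{F}$ is the set of simple acts $f:S\to X$ ($\Sigma$-measurable, finitely many values) with pointwise mixtures; elements of $X$ are identified with constant acts. $f\Join g$ means $f\not\succ g$ and $g\not\succ f$. $B_0(\Sigma)$ is the set of real-valued $\Sigma$-measurable simple functions on $S$; $u(f)$ denotes $s\mapsto u(f(s))\in B_0(\Sigma)$. A functional $I:B_0(\Sigma)\to\mathbb{R}$ is constant-linear if $I(a\varphi+b)=aI(\varphi)+b$ for all $\varphi\in B_0(\Sigma)$, $a\ge0$, $b\in\mathbb{R}$ ($b$ the constant function), and monotonic if $\varphi\ge\psi$ pointwise implies $I(\varphi)\ge I(\psi)$. *)

(* Defs.v *)
From HB Require Import structures.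
From mathcomp Require Import all_boot all_order all_algebra.
From mathcomp Require Import Rstruct.
Set Implicit Arguments. Unset Strict Implicit. Unset Printing Implicit Defensive.
Import Order.TTheory GRing.Theory Num.Theory.
Local Open Scope ring_scope.

Notation Real := Rdefinitions.R.

Definition is_algebra (S : Type) (Sig : (S -> Prop) -> Prop) : Prop :=
  Sig (fun _ => False) /\
  (forall A, Sig A -> Sig (fun s => ~ A s)) /\
  (forall A B, Sig A -> Sig B -> Sig (fun s => A s \/ B s)).

Definition simple_meas (S : Type) (Sig : (S -> Prop) -> Prop) (T : eqType)
  (f : S -> T) : Prop :=
  (exists l : seq T, forall s, f s \in l) /\
  (forall t : T, Sig (fun s => f s = t)).

Definition is_act (S : Type) (Sig : (S -> Prop) -> Prop) (V : lmodType Real)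
  (X : V -> Prop) (f : S -> V) : Prop :=
  simple_meas Sig f /\ forall s, X (f s).

Definition B0 (S : Type) (Sig : (S -> Prop) -> Prop) (phi : S -> Real) : Prop :=
  simple_meas Sig phi.

Definition convex_set (V : lmodType Real) (X : V -> Prop) : Prop :=
  forall x y (a : Real), X x -> X y -> 0 <= a <= 1 -> X (a *: x + (1 - a) *: y).

Definition non_singleton (V : lmodType Real) (X : V -> Prop) : Prop :=
  exists x y, X x /\ X y /\ x <> y.

Definition mix (S : Type) (V : lmodType Real) (a : Real) (f g : S -> V) : S -> V :=
  fun s => a *: f s + (1 - a) *: g s.
Definition cst (S : Type) (V : lmodType Real) (x : V) : S -> V := fun _ => x.
Arguments cst S {V} x.

Definition incomp (A : Type) (P : A -> A -> Prop) (f g : A) : Prop :=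
  ~ P f g /\ ~ P g f.

Definition open_in_unit (O : Real -> Prop) : Prop :=
  forall a, 0 <= a <= 1 -> O a ->
    exists e : Real, 0 < e /\
      forall b, 0 <= b <= 1 -> `|b - a| < e -> O b.


Definition A1 (S : Type) (Sig : (S -> Prop) -> Prop) (V : lmodType Real)
  (X : V -> Prop) (P : (S -> V) -> (S -> V) -> Prop) : Prop :=
  let act := is_act Sig X in
  (forall f g, act f -> act g -> P f g -> ~ P g f) /\
  (forall f g h, act f -> act g -> act h -> P f g -> P g h -> P f h) /\
  (exists x y, X x /\ X y /\ P (cst S x) (cst S y)) /\
  (forall x y z, X x -> X y -> X z -> P (cst S x) (cst S y) ->
     P (cst S x) (cst S z) \/ P (cst S z) (cst S y)).

Definition A2 (S : Type) (Sig : (S -> Prop) -> Prop) (V : lmodType Real)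
  (X : V -> Prop) (P : (S -> V) -> (S -> V) -> Prop) : Prop :=
  let act := is_act Sig X in
  forall f g h, act f -> act g -> act h ->
    open_in_unit (fun a => P (mix a f g) h) /\
    open_in_unit (fun a => P h (mix a f g)).

Definition A3 (S : Type) (Sig : (S -> Prop) -> Prop) (V : lmodType Real)
  (X : V -> Prop) (P : (S -> V) -> (S -> V) -> Prop) : Prop :=
  let act := is_act Sig X in
  forall f g x (a : Real), act f -> act g -> X x -> 0 < a < 1 ->
    (P f g <-> P (mix a f (cst S x)) (mix a g (cst S x))).

Definition A5 (S : Type) (Sig : (S -> Prop) -> Prop) (V : lmodType Real)
  (X : V -> Prop) (P : (S -> V) -> (S -> V) -> Prop) : Prop :=
  let act := is_act Sig X in
  forall f g, act f -> act g ->
    (forall s, P (cst S (f s)) (cst S (g s))) -> P f g.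

Definition A6 (S : Type) (Sig : (S -> Prop) -> Prop) (V : lmodType Real)
  (X : V -> Prop) (P : (S -> V) -> (S -> V) -> Prop) : Prop :=
  let act := is_act Sig X in
  forall f g, act f -> act g ->
    (forall x, X x -> incomp P f (cst S x) -> incomp P g (cst S x)) ->
    incomp P f g.

Definition A7 (S : Type) (Sig : (S -> Prop) -> Prop) (V : lmodType Real)
  (X : V -> Prop) (P : (S -> V) -> (S -> V) -> Prop) : Prop :=
  let act := is_act Sig X in
  forall f g x y, act f -> act g -> X x -> X y ->
    incomp P f (cst S x) -> P (cst S x) g -> incomp P g (cst S y) ->
    P f (cst S y) -> P f g.


Definition affine_on (V : lmodType Real) (X : V -> Prop) (u : V -> Real) : Prop :=
  forall x y (a : Real), X x -> X y -> 0 <= a <= 1 ->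
    u (a *: x + (1 - a) *: y) = a * u x + (1 - a) * u y.

Definition nonconstant_on (V : lmodType Real) (X : V -> Prop) (u : V -> Real) : Prop :=
  exists x y, X x /\ X y /\ u x <> u y.

Definition const_linear (S : Type) (Sig : (S -> Prop) -> Prop)
  (I : (S -> Real) -> Real) : Prop :=
  forall phi (a b : Real), B0 Sig phi -> 0 <= a ->
    I (fun s => a * phi s + b) = a * I phi + b.

Definition monotonic (S : Type) (Sig : (S -> Prop) -> Prop)
  (I : (S -> Real) -> Real) : Prop :=
  forall phi psi, B0 Sig phi -> B0 Sig psi ->
    (forall s, psi s <= phi s) -> I psi <= I phi.

Definition represents (S : Type) (Sig : (S -> Prop) -> Prop) (V : lmodType Real)
  (X : V -> Prop) (P : (S -> V) -> (S -> V) -> Prop)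
  (u : V -> Real) (Ip Io : (S -> Real) -> Real) : Prop :=
  affine_on X u /\ nonconstant_on X u /\
  const_linear Sig Ip /\ monotonic Sig Ip /\
  const_linear Sig Io /\ monotonic Sig Io /\
  (forall h, is_act Sig X h -> Ip (fun s => u (h s)) <= Io (fun s => u (h s))) /\
  (forall f g, is_act Sig X f -> is_act Sig X g ->
     (P f g <->
       (Ip (fun s => u (g s)) < Ip (fun s => u (f s)) /\
        Io (fun s => u (g s)) < Io (fun s => u (f s))))).

(* Main.v *)
From HB Require Import structures.
From Stdlib Require Import ClassicalEpsilon FunctionalExtensionality PropExtensionality Classical.
From Stdlib Require Raxioms Rdefinitions.
Require Import Defs.
From mathcomp Require Import all_boot all_order all_algebra.
From mathcomp Require Import Rstruct.
From mathcomp Require Import ring lra.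
Set Implicit Arguments. Unset Strict Implicit. Unset Printing Implicit Defensive.
Import Order.TTheory GRing.Theory Num.Theory.
Local Open Scope ring_scope.

Lemma sup_ex (E : Real -> Prop) (M : Real) :
  (exists x, E x) -> (forall x, E x -> x <= M) ->
  exists m, (forall x, E x -> x <= m) /\ (forall b, (forall x, E x -> x <= b) -> m <= b).
Proof.
move=> hne hb.
have hB : Raxioms.bound E.
  by exists M => x /hb /RleP.
case: (@Raxioms.completeness E hB hne) => m [hub hl].
exists m; split.
  by move=> x /hub /RleP.
by move=> b hb'; apply/RleP; apply: hl => x /hb' /RleP.
Qed.

Section Vec.
Variable V : lmodType Real.
Implicit Types x y z b w : V.

Lemma comb_eq x y (a a' c c' : Real) : a = a' -> c = c' -> a *: x + c *: y = a' *: x + c' *: y.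
Proof. by move=> -> ->. Qed.

Lemma mix1 x y : 1 *: x + (1 - 1) *: y = x.
Proof. by rewrite subrr scale0r addr0 scale1r. Qed.

Lemma mix0 x y : 0 *: x + (1 - 0) *: y = y.
Proof. by rewrite scale0r add0r subr0 scale1r. Qed.

Lemma mixxx (a : Real) x : a *: x + (1 - a) *: x = x.
Proof. by rewrite -scalerDl addrC subrK scale1r. Qed.

Lemma mixC (a : Real) x y : a *: x + (1 - a) *: y = (1 - a) *: y + (1 - (1 - a)) *: x.
Proof. have -> : 1 - (1 - a) = a by ring. by rewrite addrC. Qed.

Lemma mix_mix (c t s : Real) b w :
  c *: (t *: b + (1 - t) *: w) + (1 - c) *: (s *: b + (1 - s) *: w)
  = (c * t + (1 - c) * s) *: b + (1 - (c * t + (1 - c) * s)) *: w.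
Proof.
rewrite !scalerDr !scalerA addrACA -!scalerDl.
by apply: comb_eq; ring.
Qed.

Lemma mix_mix2 (c t : Real) b w y :
  c *: (t *: b + (1 - t) *: w) + (1 - c) *: y
  = c *: (t *: b + (1 - t) *: w) + (1 - c) *: y.
Proof. by []. Qed.

End Vec.

Lemma fext_prop (S : Type) (A B : S -> Prop) : (forall s, A s <-> B s) -> A = B.
Proof. by move=> h; apply: functional_extensionality => s; apply: propositional_extensionality. Qed.

Section Meas.
Variables (S : Type) (Sig : (S -> Prop) -> Prop).
Hypothesis HSig : is_algebra Sig.

Lemma Sig_ext (A B : S -> Prop) : Sig A -> (forall s, A s <-> B s) -> Sig B.
Proof. by move=> hA h; rewrite -(fext_prop h). Qed.

Lemma Sig_False : Sig (fun _ => False).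
Proof. by case: HSig. Qed.

Lemma Sig_True : Sig (fun _ => True).
Proof.
case: HSig => h0 [hc _]; apply: Sig_ext (hc _ h0) _ => s; tauto.
Qed.

Lemma Sig_or A B : Sig A -> Sig B -> Sig (fun s => A s \/ B s).
Proof. by case: HSig => _ [_ hu]; apply: hu. Qed.

Lemma Sig_not A : Sig A -> Sig (fun s => ~ A s).
Proof. by case: HSig => _ [hc _]; apply: hc. Qed.

Lemma Sig_and A B : Sig A -> Sig B -> Sig (fun s => A s /\ B s).
Proof.
move=> hA hB.
apply: Sig_ext (Sig_not (Sig_or (Sig_not hA) (Sig_not hB))) _ => s.
split; [move=> h; split; apply: NNPP => ?; apply: h; tauto | tauto].
Qed.

Lemma Sig_const (P : Prop) : Sig (fun _ => P).
Proof.
case: (classic P) => hP.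
  by apply: Sig_ext Sig_True _ => s; tauto.
by apply: Sig_ext Sig_False _ => s; tauto.
Qed.

Lemma pre_meas (T : eqType) (phi : S -> T) :
  simple_meas Sig phi -> forall Q : T -> Prop, Sig (fun s => Q (phi s)).
Proof.
case=> [[l hl] hlev] Q.
have H : forall l' : seq T, Sig (fun s => phi s \in l' /\ Q (phi s)).
  elim=> [|v l' IH].
    by apply: Sig_ext Sig_False _ => s; rewrite in_nil; split => //; case.
  have hv : Sig (fun s => phi s = v /\ Q v).
    by apply: Sig_and (hlev v) (Sig_const _).
  apply: Sig_ext (Sig_or hv IH) _ => s; rewrite in_cons; split.
    case=> [[-> hq]|[-> hq]]; last by rewrite orbT.
    by rewrite eqxx.
  case=> /orP [/eqP -> | h] hq; [by left | by right].
by apply: Sig_ext (H l) _ => s; split => [[]|] //; split.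
Qed.

Lemma simple_comp (T T' : eqType) (phi : S -> T) (F : T -> T') :
  simple_meas Sig phi -> simple_meas Sig (fun s => F (phi s)).
Proof.
move=> h; split.
  case: h => [[l hl] _]; exists (map F l) => s; exact: map_f.
by move=> t; apply: (pre_meas h (fun v => F v = t)).
Qed.

Lemma simple_pair (T T' : eqType) (phi : S -> T) (psi : S -> T') :
  simple_meas Sig phi -> simple_meas Sig psi -> simple_meas Sig (fun s => (phi s, psi s)).
Proof.
move=> h1 h2; split.
  case: h1 => [[l1 hl1] _]; case: h2 => [[l2 hl2] _].
  by exists [seq (x, y) | x <- l1, y <- l2] => s; apply: allpairs_f.
move=> [a b]; apply: Sig_ext (Sig_and (h1.2 a) (h2.2 b)) _ => s.
by split => [[-> ->] | [-> ->]].
Qed.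

Lemma simple_comp2 (T T' T'' : eqType) (phi : S -> T) (psi : S -> T') (F : T -> T' -> T'') :
  simple_meas Sig phi -> simple_meas Sig psi -> simple_meas Sig (fun s => F (phi s) (psi s)).
Proof.
move=> h1 h2; exact: (simple_comp (fun p => F p.1 p.2) (simple_pair h1 h2)).
Qed.

Lemma simple_cst (T : eqType) (x : T) : simple_meas Sig (fun _ : S => x).
Proof. by split; [exists [:: x] => s; rewrite mem_seq1 | move=> t; apply: Sig_const]. Qed.

Lemma simple_bound (phi : S -> Real) : simple_meas Sig phi ->
  exists K : Real, 0 < K /\ forall s, `|phi s| <= K.
Proof.
case=> [[l hl] _].
exists (1 + \sum_(v <- l) `|v|); split.
  by apply: (lt_le_trans ltr01); rewrite lerDl sumr_ge0.
move=> s; have := hl s.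
have H : forall l' : seq Real, phi s \in l' -> `|phi s| <= \sum_(v <- l') `|v|.
  elim=> [|v l' IH] //; rewrite in_cons big_cons => /orP [/eqP <-|h].
    by rewrite lerDl sumr_ge0.
  by rewrite (le_trans (IH h)) // lerDr.
move=> /H h; apply: le_trans h _; rewrite lerDr //.
Qed.

Lemma simple_argmin (T : eqType) (phi : S -> T) (g : T -> Real) (s0 : S) :
  simple_meas Sig phi -> exists sm, forall s, g (phi sm) <= g (phi s).
Proof.
case=> [[l hl] _].
have H : forall l' : seq T, exists sm, forall s, phi s \in l' -> g (phi sm) <= g (phi s).
  elim=> [|v l' [sm IH]]; first by exists s0.
  case: (classic (exists s1, phi s1 = v /\ g v < g (phi sm))) => [[s1 [e1 h1]]|hn].
    exists s1 => s; rewrite in_cons => /orP [/eqP ->|h]; first by rewrite e1.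
    by rewrite e1; apply: le_trans (ltW h1) (IH _ h).
  exists sm => s; rewrite in_cons => /orP [/eqP e|h]; last exact: IH.
  rewrite e; rewrite leNgt; apply/negP => hlt; apply: hn; by exists s.
case: (H l) => sm hsm; exists sm => s; exact: hsm.
Qed.

Lemma simple_argmax (T : eqType) (phi : S -> T) (g : T -> Real) (s0 : S) :
  simple_meas Sig phi -> exists sm, forall s, g (phi s) <= g (phi sm).
Proof.
move=> h; case: (simple_argmin (fun t => - g t) s0 h) => sm hsm.
by exists sm => s; have := hsm s; rewrite lerN2.
Qed.

End Meas.

Section AffUniq.
Variables (V : lmodType Real) (C : V -> Prop) (v v' : V -> Real).
Hypothesis Cconv : forall x y (a : Real), C x -> C y -> 0 <= a <= 1 -> C (a *: x + (1 - a) *: y).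
Hypothesis vaff : forall x y (a : Real), C x -> C y -> 0 <= a <= 1 ->
  v (a *: x + (1 - a) *: y) = a * v x + (1 - a) * v y.
Hypothesis v'aff : forall x y (a : Real), C x -> C y -> 0 <= a <= 1 ->
  v' (a *: x + (1 - a) *: y) = a * v' x + (1 - a) * v' y.
Hypothesis ord : forall x y, C x -> C y -> (v x < v y <-> v' x < v' y).
Variables (x0 x1 : V).
Hypotheses (hx0 : C x0) (hx1 : C x1) (h01 : v x0 < v x1).

Lemma ord_eq x y : C x -> C y -> v x = v y -> v' x = v' y.
Proof.
move=> hx hy e; case: (ltgtP (v' x) (v' y)) => // h.
  by move/(ord hx hy): h; rewrite e ltxx.
by move/(ord hy hx): h; rewrite e ltxx.
Qed.

Lemma aff_uniq z : C z ->
  v' z = v' x0 + (v z - v x0) * (v' x1 - v' x0) / (v x1 - v x0).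
Proof.
move=> hz; have H01 := h01.
have D0 : v x1 - v x0 != 0 by rewrite subr_eq0 gt_eqF.
case: (lerP (v x0) (v z)) => hz0.
  case: (lerP (v z) (v x1)) => hz1.
    have ht : 0 <= (v z - v x0) / (v x1 - v x0) <= 1.
      by apply/andP; split; [apply: divr_ge0; lra | rewrite ler_pdivrMr; lra].
    have hp := Cconv hx1 hx0 ht.
    have e1 : v (((v z - v x0) / (v x1 - v x0)) *: x1 + (1 - ((v z - v x0) / (v x1 - v x0))) *: x0) = v z.
      by rewrite vaff //; field.
    rewrite -(ord_eq hp hz e1) v'aff //; field => //.
  have E0 : v z - v x0 != 0 by rewrite gt_eqF // subr_gt0; apply: lt_trans h01 hz1.
  have ht : 0 <= (v x1 - v x0) / (v z - v x0) <= 1.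
    by apply/andP; split; [apply: divr_ge0; lra | rewrite ler_pdivrMr; lra].
  have hp := Cconv hz hx0 ht.
  have e1 : v (((v x1 - v x0) / (v z - v x0)) *: z + (1 - ((v x1 - v x0) / (v z - v x0))) *: x0) = v x1.
    by rewrite vaff //; field.
  have := ord_eq hp hx1 e1; rewrite v'aff // => <-.
  field; apply/andP; split => //.
have F0 : v x1 - v z != 0 by rewrite gt_eqF // subr_gt0; apply: lt_trans hz0 h01.
have ht : 0 <= (v x1 - v x0) / (v x1 - v z) <= 1.
  by apply/andP; split; [apply: divr_ge0; lra | rewrite ler_pdivrMr; lra].
have hp := Cconv hz hx1 ht.
have e1 : v (((v x1 - v x0) / (v x1 - v z)) *: z + (1 - ((v x1 - v x0) / (v x1 - v z))) *: x1) = v x0.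
  by rewrite vaff //; field.
have := ord_eq hp hx0 e1; rewrite v'aff // => <-.
field; apply/andP; split => //.
Qed.

End AffUniq.

Lemma absltP (d e : Real) : - e < d -> d < e -> `|d| < e.
Proof. by move=> h1 h2; rewrite ltr_norml h1 h2. Qed.

Lemma absltE (d e : Real) : `|d| < e -> - e < d /\ d < e.
Proof. by rewrite ltr_norml => /andP. Qed.

Lemma pick_up (m e hi : Real) : m < hi -> 0 < e -> exists t, m < t /\ t < hi /\ t - m < e.
Proof.
move=> h1 h2; case: (lerP e (hi - m)) => h.
  by exists (m + e / 2); split; [|split]; lra.
by exists (m + (hi - m) / 2); split; [|split]; lra.
Qed.

Lemma pick_down (m e lo : Real) : lo < m -> 0 < e -> exists t, lo < t /\ t < m /\ m - t < e.
Proof.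
move=> h1 h2; case: (lerP e (m - lo)) => h.
  by exists (m - e / 2); split; [|split]; lra.
by exists (m - (m - lo) / 2); split; [|split]; lra.
Qed.

Definition seg (V : lmodType Real) (b w : V) (t : Real) : V := t *: b + (1 - t) *: w.

Section VNM.
Variables (V : lmodType Real) (X : V -> Prop) (R : V -> V -> Prop).
Hypothesis Hconv : convex_set X.
Hypothesis Rasym : forall x y, X x -> X y -> R x y -> ~ R y x.
Hypothesis Rtrans : forall x y z, X x -> X y -> X z -> R x y -> R y z -> R x z.
Hypothesis Rneg : forall x y z, X x -> X y -> X z -> R x y -> R x z \/ R z y.
Hypothesis Rcont1 : forall x y z, X x -> X y -> X z ->
  open_in_unit (fun a => R (a *: x + (1 - a) *: y) z).
Hypothesis Rcont2 : forall x y z, X x -> X y -> X z ->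
  open_in_unit (fun a => R z (a *: x + (1 - a) *: y)).
Hypothesis Rind : forall x y z (a : Real), X x -> X y -> X z -> 0 < a < 1 ->
  (R x y <-> R (a *: x + (1 - a) *: z) (a *: y + (1 - a) *: z)).

Definition Ind x y := ~ R x y /\ ~ R y x.

Lemma Ind_refl x : X x -> Ind x x.
Proof. by move=> hx; split => h; exact: (Rasym hx hx h h). Qed.

Lemma Ind_sym x y : Ind x y -> Ind y x.
Proof. by case. Qed.

Lemma Ind_trans x y z : X x -> X y -> X z -> Ind x y -> Ind y z -> Ind x z.
Proof.
move=> hx hy hz [h1 h2] [h3 h4]; split => h.
  by case: (Rneg hx hz hy h).
by case: (Rneg hz hx hy h).
Qed.

Lemma R_Ind x y z : X x -> X y -> X z -> R x y -> Ind y z -> R x z.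
Proof. move=> hx hy hz h [_ h2]; by case: (Rneg hx hy hz h). Qed.

Lemma Ind_R x y z : X x -> X y -> X z -> Ind x y -> R y z -> R x z.
Proof. move=> hx hy hz [_ h2] h; by case: (Rneg hy hz hx h). Qed.

Lemma conv x y (a : Real) : X x -> X y -> 0 <= a <= 1 -> X (a *: x + (1 - a) *: y).
Proof. exact: Hconv. Qed.

Lemma M1 x y (c : Real) : X x -> X y -> 0 < c <= 1 -> R x y -> R (c *: x + (1 - c) *: y) y.
Proof.
move=> hx hy /andP [c0 c1] h.
case: (eqVneq c 1) => [->|c1']; first by rewrite mix1.
have := (Rind hx hy hy (a := c)); rewrite mixxx => H; apply/H => //.
by apply/andP; split => //; rewrite lt_neqAle c1' c1.
Qed.

Lemma M2 x y (c : Real) : X x -> X y -> 0 <= c < 1 -> R x y -> R x (c *: x + (1 - c) *: y).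
Proof.
move=> hx hy /andP [c0 c1] h.
case: (eqVneq c 0) => [->|c0']; first by rewrite mix0.
have := (Rind hx hy hx (a := 1 - c)); rewrite mixxx => H.
rewrite mixC; apply/H => //; apply/andP; split; first lra.
have : 0 < c by rewrite lt_neqAle eq_sym c0' c0.
lra.
Qed.

Section Seg.
Variables (b w : V).
Hypotheses (hb : X b) (hw : X w) (hbw : R b w).

Lemma seg_X t : 0 <= t <= 1 -> X (seg b w t).
Proof. by move=> h; apply: conv. Qed.

Lemma seg1 : seg b w 1 = b. Proof. exact: mix1. Qed.
Lemma seg0 : seg b w 0 = w. Proof. exact: mix0. Qed.

Lemma Mono s t : 0 <= s -> s < t -> t <= 1 -> R (seg b w t) (seg b w s).
Proof.
move=> h0 hst ht1.
have hs1 : s < 1 by lra.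
have hps : X (seg b w s) by apply: seg_X; apply/andP; split; lra.
have hR : R b (seg b w s) by apply: M2 => //; apply/andP; split; lra.
set c := (t - s) / (1 - s).
have hc : 0 < c <= 1.
  apply/andP; split; first by apply: divr_gt0; lra.
  by rewrite /c ler_pdivrMr; lra.
have := M1 hb hps hc hR.
have -> : c *: b + (1 - c) *: seg b w s = seg b w t.
  rewrite -{1}(mix1 b w) /seg mix_mix; apply: comb_eq.
    by rewrite /c; field; lra.
  by rewrite /c; field; lra.
done.
Qed.

Lemma Mono' s t : 0 <= s -> s <= t -> t <= 1 -> ~ R (seg b w s) (seg b w t).
Proof.
move=> h0 hst ht1 h.
have hs : X (seg b w s) by apply: seg_X; apply/andP; split; lra.
case: (eqVneq s t) => [e|ne].
  by subst; apply: (Rasym hs hs h h).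
have hlt : s < t by rewrite lt_neqAle ne.
have ht : X (seg b w t) by apply: seg_X; apply/andP; split; lra.
exact: (Rasym ht hs (Mono h0 hlt ht1) h).
Qed.

Definition Ival z := X z /\ ~ R z b /\ ~ R w z.

Lemma IVT z : Ival z -> exists t, 0 <= t <= 1 /\ Ind z (seg b w t).
Proof.
move=> [hz [hzb hwz]].
pose E t := (0 <= t <= 1 /\ R z (seg b w t)) \/ t = 0.
have [m [mub mlub]] : exists m, (forall x, E x -> x <= m) /\
    (forall b', (forall x, E x -> x <= b') -> m <= b').
  apply: (sup_ex (M := 1)); first by exists 0; right.
  by move=> x [[/andP [_ h] _]|->] //; lra.
have m0 : 0 <= m by apply: mub; right.
have m1 : m <= 1 by apply: mlub => x [[/andP [_ h] _]|->] //; lra.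
have hm : 0 <= m <= 1 by apply/andP.
exists m; split => //; split => h.
-
  have mne : m != 1 by apply/eqP => e; subst; apply: hzb; rewrite -seg1.
  have mlt : m < 1 by rewrite lt_neqAle mne.
  case: (Rcont2 hb hw hz hm h) => e [e0 he].
  case: (pick_up mlt e0) => t [h1 [h2 h3]].
  have : t <= m.
    apply: mub; left; split; first by apply/andP; split; lra.
    by apply: he; [apply/andP; split; lra | apply: absltP; lra].
  lra.
-
  have mne : m != 0 by apply/eqP => e; subst; apply: hwz; rewrite -seg0.
  have mgt : 0 < m by rewrite lt_neqAle eq_sym mne.
  case: (Rcont1 hb hw hz hm h) => e [e0 he].
  case: (pick_down mgt e0) => t [h1 [h2 h3]].
  have ht : R (seg b w t) z.
    by apply: he; [apply/andP; split; lra | apply: absltP; lra].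
  have : ~ (forall x, E x -> x <= t).
    by move=> hh; have := mlub _ hh; lra.
  move=> /not_all_ex_not [t'' Hn]; have [ht'' hn] := imply_to_and _ _ Hn.
  have hlt : t < t'' by rewrite ltNge; apply/negP.
  case: ht'' => [[/andP [_ t1] hr]|e'']; last by subst; lra.
  have hts : X (seg b w t) by apply: seg_X; apply/andP; split; lra.
  have hts' : X (seg b w t'') by apply: seg_X; apply/andP; split; lra.
  have := Rtrans hts hz hts' ht hr.
  by apply: Rasym => //; apply: Mono => //; lra.
Qed.

Lemma seg_uniq z s t : X z -> 0 <= s <= 1 -> 0 <= t <= 1 ->
  Ind z (seg b w s) -> Ind z (seg b w t) -> s = t.
Proof.
move=> hz /andP [s0 s1] /andP [t0 t1] h1 h2.
have hs : X (seg b w s) by apply: seg_X; apply/andP; split.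
have ht : X (seg b w t) by apply: seg_X; apply/andP; split.
have h := Ind_trans hs hz ht (Ind_sym h1) h2.
case: (ltgtP s t) => // hlt.
  by case: h => _ []; apply: (Mono s0 hlt t1).
by case: h => [] []; apply: (Mono t0 hlt s1).
Qed.

Lemma Ival_seg t : 0 <= t <= 1 -> Ival (seg b w t).
Proof.
move=> /andP [t0 t1]; split; first by apply: seg_X; apply/andP.
split.
  by rewrite -{2}seg1; apply: Mono' => //.
by rewrite -{1}seg0; apply: Mono' => //.
Qed.

Lemma Ival_Ind z t : X z -> 0 <= t <= 1 -> Ind z (seg b w t) -> Ival z.
Proof.
move=> hz ht [h1 h2]; have [hs [hsb hws]] := Ival_seg ht.
split => //; split => h.
  by case: (Rneg hz hb hs h).
by case: (Rneg hw hz hs h).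
Qed.

Definition ub z := epsilon (inhabits 0) (fun t => 0 <= t <= 1 /\ Ind z (seg b w t)).

Lemma ub_spec z : Ival z -> 0 <= ub z <= 1 /\ Ind z (seg b w (ub z)).
Proof. move=> h; apply: (epsilon_spec (inhabits 0) (fun t => 0 <= t <= 1 /\ Ind z (seg b w t))); exact: IVT h. Qed.

Lemma ub_eq z t : X z -> 0 <= t <= 1 -> Ind z (seg b w t) -> ub z = t.
Proof.
move=> hz ht h; have hI := Ival_Ind hz ht h; case: (ub_spec hI) => h1 h2.
exact: (seg_uniq hz h1 ht h2 h).
Qed.

Lemma Subst y y' z (c : Real) : X y -> X y' -> X z -> 0 <= c <= 1 -> Ind y y' ->
  Ind (c *: y + (1 - c) *: z) (c *: y' + (1 - c) *: z).
Proof.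
move=> hy hy' hz /andP [c0 c1] [h1 h2].
case: (eqVneq c 0) => [->|ne0]; first by rewrite !mix0; apply: Ind_refl.
case: (eqVneq c 1) => [->|ne1]; first by rewrite !mix1; split.
have hc : 0 < c < 1.
  apply/andP; split; rewrite lt_neqAle ?c0 ?c1 ?andbT //.
  by rewrite eq_sym.
by split; rewrite -(Rind _ _ _ hc).
Qed.

Lemma ub_mix y z (c : Real) : Ival y -> Ival z -> 0 <= c <= 1 ->
  Ival (c *: y + (1 - c) *: z) /\ ub (c *: y + (1 - c) *: z) = c * ub y + (1 - c) * ub z.
Proof.
move=> hy hz hc.
case: (ub_spec hy) => hty Iy; case: (ub_spec hz) => htz Iz.
have Xy := hy.1; have Xz := hz.1.
have Xpy := seg_X hty; have Xpz := seg_X htz.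
have hc' : 0 <= 1 - c <= 1 by case/andP: hc => ??; apply/andP; split; lra.
have I1 := Subst Xy Xpy Xz hc Iy.
have I2 := Subst Xz Xpz Xpy hc' Iz.
rewrite -!mixC in I2.
have hmix : X (c *: y + (1 - c) *: z) by apply: conv.
have hm1 : X (c *: seg b w (ub y) + (1 - c) *: z) by apply: conv.
have hm2 : X (c *: seg b w (ub y) + (1 - c) *: seg b w (ub z)) by apply: conv.
have I3 := Ind_trans hmix hm1 hm2 I1 I2.
rewrite /seg mix_mix -/(seg b w _) in I3.
have ht : 0 <= c * ub y + (1 - c) * ub z <= 1.
  case/andP: hc => ??; case/andP: hty => ??; case/andP: htz => ??.
  apply/andP; split; nra.
split; first exact: Ival_Ind hmix ht I3.
exact: ub_eq hmix ht I3.
Qed.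

Lemma ub_dir y z : Ival y -> Ival z -> ub z < ub y -> R y z.
Proof.
move=> hy hz hlt.
case: (ub_spec hy) => hty Iy; case: (ub_spec hz) => htz Iz.
have Xy := hy.1; have Xz := hz.1.
have Xpy := seg_X hty; have Xpz := seg_X htz.
case/andP: hty => hy0 hy1; case/andP: htz => hz0 hz1.
have h := Mono hz0 hlt hy1.
apply: (R_Ind Xy Xpz Xz _ (Ind_sym Iz)).
exact: (Ind_R Xy Xpy Xpz Iy h).
Qed.

Lemma ub_rep y z : Ival y -> Ival z -> (R y z <-> ub z < ub y).
Proof.
move=> hy hz.
case: (ub_spec hy) => hty Iy; case: (ub_spec hz) => htz Iz.
have Xy := hy.1; have Xz := hz.1.
have Xpy := seg_X hty; have Xpz := seg_X htz.
split; last exact: ub_dir.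
move=> h; case: (ltgtP (ub z) (ub y)) => // hle.
  by case: (Rasym Xy Xz h); apply: ub_dir.
case: (Ind_trans Xy Xpy Xz Iy _) => //.
by rewrite -hle; apply: Ind_sym.
Qed.

Lemma ub_b : ub b = 1.
Proof. apply: ub_eq => //; first by rewrite ler01 lexx. by rewrite seg1; apply: Ind_refl. Qed.

Lemma ub_w : ub w = 0.
Proof. apply: ub_eq => //; first by rewrite lexx ler01. by rewrite seg0; apply: Ind_refl. Qed.

Lemma Ival_b : Ival b.
Proof. by rewrite -seg1; apply: Ival_seg; rewrite ler01 lexx. Qed.
Lemma Ival_w : Ival w.
Proof. by rewrite -seg0; apply: Ival_seg; rewrite ler01 lexx. Qed.

End Seg.

Section Global.
Variables (x0 x1 : V).
Hypotheses (Hx0 : X x0) (Hx1 : X x1) (H01 : R x1 x0).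

Lemma NR_trans a b c : X a -> X b -> X c -> ~ R a b -> ~ R b c -> ~ R a c.
Proof. move=> ha hb hc h1 h2 h; by case: (Rneg ha hc hb h). Qed.

Definition hi a b := if excluded_middle_informative (R a b) then a else b.
Definition lo a b := if excluded_middle_informative (R a b) then b else a.

Lemma hi_X a b : X a -> X b -> X (hi a b).
Proof. by rewrite /hi; case: excluded_middle_informative. Qed.
Lemma lo_X a b : X a -> X b -> X (lo a b).
Proof. by rewrite /lo; case: excluded_middle_informative. Qed.
Lemma hi_l a b : X a -> X b -> ~ R a (hi a b).
Proof.
move=> ha hb; rewrite /hi; case: excluded_middle_informative => h //.
by move=> h'; apply: (Rasym ha ha h' h').
Qed.
Lemma hi_r a b : X a -> X b -> ~ R b (hi a b).
Proof.
move=> ha hb; rewrite /hi; case: excluded_middle_informative => h.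
  exact: Rasym.
by move=> h'; apply: (Rasym hb hb h' h').
Qed.
Lemma lo_l a b : X a -> X b -> ~ R (lo a b) a.
Proof.
move=> ha hb; rewrite /lo; case: excluded_middle_informative => h.
  exact: Rasym.
by move=> h'; apply: (Rasym ha ha h' h').
Qed.
Lemma lo_r a b : X a -> X b -> ~ R (lo a b) b.
Proof.
move=> ha hb; rewrite /lo; case: excluded_middle_informative => h //.
by move=> h'; apply: (Rasym hb hb h' h').
Qed.
Lemma hi_le a b c : ~ R a c -> ~ R b c -> ~ R (hi a b) c.
Proof. by rewrite /hi; case: excluded_middle_informative. Qed.
Lemma lo_le a b c : ~ R c a -> ~ R c b -> ~ R c (lo a b).
Proof. by rewrite /lo; case: excluded_middle_informative. Qed.

Lemma Ival_sub b w b' w' z : X b -> X w -> X b' -> X w' -> ~ R b b' -> ~ R w' w ->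
  Ival b w z -> Ival b' w' z.
Proof.
move=> hb hw hb' hw' h1 h2 [hz [hzb hwz]]; split => //; split.
  exact: (NR_trans hz hb hb').
exact: (NR_trans hw' hw hz).
Qed.

Definition N b w z := (ub b w z - ub b w x0) / (ub b w x1 - ub b w x0).

Lemma bw_ok b w : X b -> X w -> ~ R x1 b -> ~ R w x0 ->
  R b w /\ Ival b w x0 /\ Ival b w x1.
Proof.
move=> hb hw h1 h2.
have hbx0 : R b x0 by case: (Rneg Hx1 Hx0 hb H01).
have hbw : R b w by case: (Rneg hb Hx0 hw hbx0).
split => //; split; split => //; split => //.
- by move=> h; case: (Rneg Hx0 hb Hx1 h) => // h5; case: (Rasym Hx1 Hx0 H01 h5).
- by move=> h; case: (Rneg hw Hx1 Hx0 h) => // h5; case: (Rasym Hx1 Hx0 H01 h5).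
Qed.

Lemma ub_pos b w : X b -> X w -> ~ R x1 b -> ~ R w x0 -> ub b w x0 < ub b w x1.
Proof.
move=> hb hw h1 h2; have [hbw [i0 i1]] := bw_ok hb hw h1 h2.
by apply/(ub_rep hb hw hbw i1 i0).
Qed.

Lemma N_cons b w b' w' z : X b -> X w -> X b' -> X w' ->
  ~ R x1 b -> ~ R w x0 -> ~ R b b' -> ~ R w' w -> Ival b w z -> N b w z = N b' w' z.
Proof.
move=> hb hw hb' hw' h1 h2 h3 h4 hz.
have [hbw [i0 i1]] := bw_ok hb hw h1 h2.
have h1' : ~ R x1 b' by apply: (NR_trans Hx1 hb hb').
have h2' : ~ R w' x0 by apply: (NR_trans hw' hw Hx0).
have [hbw' _] := bw_ok hb' hw' h1' h2'.
have p1 := ub_pos hb hw h1 h2; have p2 := ub_pos hb' hw' h1' h2'.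
have hord : forall x y, Ival b w x -> Ival b w y -> (ub b w x < ub b w y <-> ub b' w' x < ub b' w' y).
  move=> x y hx hy.
  rewrite -(ub_rep hb hw hbw hy hx) (ub_rep hb' hw' hbw' (Ival_sub hb hw hb' hw' h3 h4 hy)
    (Ival_sub hb hw hb' hw' h3 h4 hx)).
  done.
have key := @aff_uniq V (Ival b w) (ub b w) (ub b' w')
  (fun x y a hx hy ha => (ub_mix hb hw hbw hx hy ha).1)
  (fun x y a hx hy ha => (ub_mix hb hw hbw hx hy ha).2)
  (fun x y a hx hy ha => (ub_mix hb' hw' hbw'
        (Ival_sub hb hw hb' hw' h3 h4 hx) (Ival_sub hb hw hb' hw' h3 h4 hy) ha).2)
  hord x0 x1 i0 i1 p1 z hz.
rewrite /N key; field.
by apply/andP; split; rewrite subr_eq0 gt_eqF.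
Qed.

Definition uu z := N (hi z x1) (lo z x0) z.

Lemma uu_N z b w : X z -> X b -> X w -> ~ R x1 b -> ~ R w x0 -> ~ R z b -> ~ R w z ->
  uu z = N b w z.
Proof.
move=> hz hb hw h1 h2 h3 h4.
apply: N_cons; try apply: hi_X; try apply: lo_X; try done.
- exact: hi_r.
- exact: lo_r.
- exact: hi_le.
- exact: lo_le.
- split => //; split; [exact: hi_l | exact: lo_l].
Qed.

Lemma uu_x0 : uu x0 = 0.
Proof. by rewrite /uu /N subrr mul0r. Qed.

Lemma uu_x1 : uu x1 = 1.
Proof.
rewrite (@uu_N x1 (hi x1 x1) (lo x1 x0)); try apply: hi_X; try apply: lo_X; try done.
- rewrite /N divff // subr_eq0 gt_eqF //; apply: ub_pos; try apply: hi_X; try apply: lo_X; try done.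
  exact: hi_l. exact: lo_r.
- exact: hi_l.
- exact: lo_r.
- exact: hi_l.
- apply: (NR_trans (lo_X Hx1 Hx0) Hx0 Hx1); [exact: lo_r | exact: Rasym].
Qed.

Lemma uu_aff : affine_on X uu.
Proof.
move=> y z c hy hz hc.
set m := c *: y + (1 - c) *: z.
have hm : X m by apply: conv.
set B := hi (hi (hi y z) m) x1; set W := lo (lo (lo y z) m) x0.
have hyz := hi_X hy hz; have hyzm := hi_X hyz hm; have hB := hi_X hyzm Hx1.
have lyz := lo_X hy hz; have lyzm := lo_X lyz hm; have hW := lo_X lyzm Hx0.
have B1 : ~ R x1 B by apply: hi_r.
have W0 : ~ R W x0 by apply: lo_r.
have Bm : ~ R m B by apply: (NR_trans hm hyzm hB); [apply: hi_r | apply: hi_l].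
have By : ~ R y B.
  apply: (NR_trans hy hyz hB); first exact: hi_l.
  by apply: (NR_trans hyz hyzm hB); [apply: hi_l | apply: hi_l].
have Bz : ~ R z B.
  apply: (NR_trans hz hyz hB); first exact: hi_r.
  by apply: (NR_trans hyz hyzm hB); [apply: hi_l | apply: hi_l].
have Wm : ~ R W m by apply: (NR_trans hW lyzm hm); [apply: lo_l | apply: lo_r].
have Wy : ~ R W y.
  apply: (NR_trans hW lyz hy); last exact: lo_l.
  by apply: (NR_trans hW lyzm lyz); [apply: lo_l | apply: lo_l].
have Wz : ~ R W z.
  apply: (NR_trans hW lyz hz); last exact: lo_r.
  by apply: (NR_trans hW lyzm lyz); [apply: lo_l | apply: lo_l].
have [hBW [i0 i1]] := bw_ok hB hW B1 W0.
have p := ub_pos hB hW B1 W0.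
rewrite (uu_N hy hB hW) // (uu_N hz hB hW) // (uu_N hm hB hW) //.
have Iy : Ival B W y by [].
have Iz : Ival B W z by [].
rewrite /N /m (ub_mix hB hW hBW Iy Iz hc).2.
field; by rewrite subr_eq0 gt_eqF.
Qed.

Lemma uu_rep y z : X y -> X z -> (R y z <-> uu z < uu y).
Proof.
move=> hy hz.
set B := hi (hi y z) x1; set W := lo (lo y z) x0.
have hyz := hi_X hy hz; have hB := hi_X hyz Hx1.
have lyz := lo_X hy hz; have hW := lo_X lyz Hx0.
have B1 : ~ R x1 B by apply: hi_r.
have W0 : ~ R W x0 by apply: lo_r.
have By : ~ R y B by apply: (NR_trans hy hyz hB); [apply: hi_l | apply: hi_l].
have Bz : ~ R z B by apply: (NR_trans hz hyz hB); [apply: hi_r | apply: hi_l].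
have Wy : ~ R W y by apply: (NR_trans hW lyz hy); [apply: lo_l | apply: lo_l].
have Wz : ~ R W z by apply: (NR_trans hW lyz hz); [apply: lo_l | apply: lo_r].
have [hBW [i0 i1]] := bw_ok hB hW B1 W0.
have p := ub_pos hB hW B1 W0.
rewrite (uu_N hy hB hW) // (uu_N hz hB hW) //.
have Iy : Ival B W y by [].
have Iz : Ival B W z by [].
rewrite (ub_rep hB hW hBW Iy Iz) /N ltr_pM2r ?invr_gt0 ?subr_gt0 // ltrD2r //.
Qed.

Theorem vnm : exists u, affine_on X u /\ (forall y z, X y -> X z -> (R y z <-> u z < u y))
  /\ u x0 = 0 /\ u x1 = 1.
Proof. exists uu; split; [exact: uu_aff | split; [exact: uu_rep | split; [exact: uu_x0 | exact: uu_x1]]]. Qed.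

End Global.
End VNM.

(* ---------- the functional J_p built from comparisons with constants ---------- *)
Lemma mix1f (S : Type) (V : lmodType Real) (f g : S -> V) : mix 1 f g = f.
Proof. by apply: functional_extensionality => s; rewrite /mix mix1. Qed.

Section Jp.
Variables (S : Type) (Sig : (S -> Prop) -> Prop) (V : lmodType Real) (X : V -> Prop)
  (P : (S -> V) -> (S -> V) -> Prop) (u : V -> Real) (s0 : S) (z0 z1 : V).
Hypothesis HSig : is_algebra Sig.
Hypothesis Hconv : convex_set X.
Local Notation act := (is_act Sig X).
Hypothesis Hasym : forall f g, act f -> act g -> P f g -> ~ P g f.
Hypothesis Htrans : forall f g h, act f -> act g -> act h -> P f g -> P g h -> P f h.
Hypothesis HA2a : forall f g h, act f -> act g -> act h -> open_in_unit (fun a => P (mix a f g) h).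
Hypothesis HA2b : forall f g h, act f -> act g -> act h -> open_in_unit (fun a => P h (mix a f g)).
Hypothesis HA3 : forall f g x (a : Real), act f -> act g -> X x -> 0 < a < 1 ->
  (P f g <-> P (mix a f (cst S x)) (mix a g (cst S x))).
Hypothesis HA5 : forall f g, act f -> act g ->
  (forall s, P (cst S (f s)) (cst S (g s))) -> P f g.
Hypothesis Hu_aff : affine_on X u.
Hypothesis Hu_rep : forall x y, X x -> X y -> (P (cst S x) (cst S y) <-> u y < u x).
Hypotheses (Hz0 : X z0) (Hz1 : X z1) (Hz01 : u z0 < u z1).

Lemma act_cst x : X x -> act (cst S x).
Proof. by move=> hx; split; [apply: simple_cst | move=> s]. Qed.

Lemma act_mix f g (a : Real) : act f -> act g -> 0 <= a <= 1 -> act (mix a f g).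
Proof.
move=> [hf hfX] [hg hgX] ha; split.
  exact: (simple_comp2 HSig (fun v w => a *: v + (1 - a) *: w) hf hg).
by move=> s; apply: Hconv.
Qed.

Lemma act_mixc f x (a : Real) : act f -> X x -> 0 <= a <= 1 -> act (mix a f (cst S x)).
Proof. by move=> hf hx ha; apply: act_mix => //; apply: act_cst. Qed.

Lemma u_mixc f x (a : Real) s : act f -> X x -> 0 <= a <= 1 ->
  u (mix a f (cst S x) s) = a * u (f s) + (1 - a) * u x.
Proof. by move=> hf hx ha; rewrite /mix /cst Hu_aff //; case: hf. Qed.

Definition uX t := exists x, X x /\ u x = t.

Lemma uX_between a b t : uX a -> uX b -> a <= t <= b -> uX t.
Proof.
move=> [xa [hxa <-]] [xb [hxb <-]] /andP [h1 h2].
case: (eqVneq (u xa) (u xb)) => e.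
  by exists xa; split => //; apply/eqP; rewrite eq_le h1 e h2.
have d : 0 < u xb - u xa by rewrite subr_gt0 lt_neqAle e; apply: le_trans h2.
have hl : 0 <= (t - u xa) / (u xb - u xa) <= 1.
  apply/andP; split; first by apply: divr_ge0; lra.
  by rewrite ler_pdivrMr //; lra.
exists (((t - u xa) / (u xb - u xa)) *: xb + (1 - (t - u xa) / (u xb - u xa)) *: xa).
split; first exact: Hconv.
rewrite Hu_aff //; field.
by rewrite gt_eqF.
Qed.

Definition Char f t := uX t /\ forall x, X x -> (P f (cst S x) <-> u x < t).

Lemma char_uniq f t t' : Char f t -> Char f t' -> t = t'.
Proof.
have aux : forall t t', Char f t -> Char f t' -> ~ t < t'.
  move=> a b [[x [hx e]] h1] [_ h2] hlt.
  have hh : u x < b by rewrite e.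
  by have := (h1 x hx).1 ((h2 x hx).2 hh); rewrite e ltxx.
move=> h1 h2; case: (ltgtP t t') => // h.
  by case: (aux _ _ h1 h2 h).
by case: (aux _ _ h2 h1 h).
Qed.

Lemma LowS f x y : act f -> X x -> X y -> P f (cst S x) -> u y < u x -> P f (cst S y).
Proof.
move=> hf hx hy h hlt; apply: (Htrans hf (act_cst hx) (act_cst hy) h).
exact/Hu_rep.
Qed.

Lemma Open f x z : act f -> X x -> X z -> u x < u z -> P f (cst S x) ->
  exists x', X x' /\ u x < u x' /\ P f (cst S x').
Proof.
move=> hf hx hz hlt h.
have ho := HA2b (act_cst hx) (act_cst hz) hf.
have h1 : 0 <= (1 : Real) <= 1 by rewrite ler01 lexx.
have h' : P f (mix 1 (cst S x) (cst S z)) by rewrite mix1f.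
case: (ho 1 h1 h') => e [e0 he].
case: (pick_down ltr01 e0) => t [t0 [t1 te]].
have ht : 0 <= t <= 1 by apply/andP; split; lra.
exists (t *: x + (1 - t) *: z); split; first exact: Hconv.
split; first by rewrite Hu_aff //; nra.
by apply: he => //; apply: absltP; lra.
Qed.

Lemma Sub1 f x y : act f -> X x -> X y -> u x = u y -> (exists z, X z /\ u x < u z) ->
  P f (cst S x) -> P f (cst S y).
Proof.
move=> hf hx hy e [z [hz hxz]] h.
case: (Open hf hx hz hxz h) => x' [hx' [hlt h']].
by apply: (LowS hf hx' hy h'); rewrite -e.
Qed.

Lemma half01 : 0 < (1 / 2 : Real) < 1.
Proof. by apply/andP; split; lra. Qed.
Lemma half01' : 0 <= (1 / 2 : Real) <= 1.
Proof. by apply/andP; split; lra. Qed.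

Lemma Sub f x y : act f -> X x -> X y -> u x = u y -> P f (cst S x) -> P f (cst S y).
Proof.
move=> hf hx hy e h; have H01 := Hz01.
case: (classic (exists z, X z /\ u x < u z)) => hab; first exact: Sub1 hab h.
have hz0x : u z0 < u x.
  by apply: (lt_le_trans H01); rewrite leNgt; apply/negP => hh; apply: hab; exists z1.
have hf' := act_mixc hf Hz0 half01'.
have hx' : X (1/2 *: x + (1 - 1/2) *: z0) by apply: Hconv => //; exact: half01'.
have hy' : X (1/2 *: y + (1 - 1/2) *: z0) by apply: Hconv => //; exact: half01'.
apply/(HA3 hf (act_cst hy) Hz0 half01).
apply: (Sub1 hf' hx' hy').
- by rewrite !Hu_aff // ?e //; exact: half01'.
- exists x; split => //; rewrite Hu_aff //; [lra | exact: half01'].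
- exact/(HA3 hf (act_cst hx) Hz0 half01).
Qed.

Lemma Low f x y : act f -> X x -> X y -> P f (cst S x) -> u y <= u x -> P f (cst S y).
Proof.
move=> hf hx hy h; rewrite le_eqVlt => /orP [/eqP e|hlt].
  exact: (Sub hf hx hy (esym e) h).
exact: LowS h hlt.
Qed.

Lemma Dom f x : act f -> X x -> (forall s, u x < u (f s)) -> P f (cst S x).
Proof.
move=> hf hx h; apply: HA5 => //; first exact: act_cst.
move=> s; apply/Hu_rep => //; by case: hf.
Qed.

Lemma DomR f x : act f -> X x -> (forall s, u (f s) < u x) -> P (cst S x) f.
Proof.
move=> hf hx h; apply: HA5 => //; first exact: act_cst.
move=> s; apply/Hu_rep => //; by case: hf.
Qed.

Lemma NotAbove1 f b : act f -> X b -> (forall s, u (f s) <= u b) ->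
  (exists z, X z /\ u b < u z) -> ~ P f (cst S b).
Proof.
move=> hf hb hle [z [hz hbz]] h.
case: (Open hf hb hz hbz h) => x' [hx' [hlt h']].
apply: (Hasym hf (act_cst hx') h').
apply: DomR => // s; exact: le_lt_trans (hle s) hlt.
Qed.

Lemma NotAbove f b : act f -> X b -> (forall s, u (f s) <= u b) -> ~ P f (cst S b).
Proof.
move=> hf hb hle h; have H01 := Hz01.
case: (classic (exists z, X z /\ u b < u z)) => hab; first exact: NotAbove1 hab h.
have hz0b : u z0 < u b.
  by apply: (lt_le_trans H01); rewrite leNgt; apply/negP => hh; apply: hab; exists z1.
have hf' := act_mixc hf Hz0 half01'.
have hb' : X (1/2 *: b + (1 - 1/2) *: z0) by apply: Hconv => //; exact: half01'.
apply: (NotAbove1 hf' hb').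
- move=> s; rewrite u_mixc // ?Hu_aff //; try exact: half01'.
  by have := hle s; lra.
- exists b; split => //; rewrite Hu_aff //; [lra | exact: half01'].
- exact/(HA3 hf (act_cst hb) Hz0 half01).
Qed.

Lemma Exist f : act f -> exists t, Char f t.
Proof.
move=> hf; have [hfs hfX] := hf.
case: (simple_argmin u s0 hfs) => sw hsw.
case: (simple_argmax u s0 hfs) => sb hsb.
set w := f sw; set b := f sb.
have hw : X w by apply: hfX.
have hb : X b by apply: hfX.
have nb : ~ P f (cst S b) by apply: NotAbove.
pose E t := t = u w \/ exists x, X x /\ P f (cst S x) /\ t = u x.
have Eub : forall t, E t -> t <= u b.
  move=> t [->|[x [hx [h ->]]]]; first exact: hsb.
  rewrite leNgt; apply/negP => hlt; apply: nb; apply: (Low hf hx hb h); exact: ltW.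
case: (sup_ex (E := E) (ex_intro _ (u w) (or_introl erefl)) Eub) => m [mub mlub].
have mw : u w <= m by apply: mub; left.
have mb : m <= u b by apply: mlub.
exists m; split.
  by apply: (uX_between (a := u w) (b := u b)); [exists w | exists b | apply/andP].
move=> x hx; split => [h|hlt].
  have hxm : u x <= m by apply: mub; right; exists x.
  rewrite lt_neqAle hxm andbT; apply/eqP => e.
  case: (ltP (u x) (u b)) => hxb.
    case: (Open hf hx hb hxb h) => x' [hx' [hlt h']].
    have : u x' <= m by apply: mub; right; exists x'.
    by rewrite -e leNgt hlt.
  by apply: nb; apply: (Low hf hx hb h hxb).
have : ~ (forall e, E e -> e <= u x).
  by move=> hh; have := mlub _ hh; rewrite leNgt hlt.
move=> /not_all_ex_not [e Hn]; have [he hn] := imply_to_and _ _ Hn.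
have hlt' : u x < e by rewrite ltNge; apply/negP.
case: he => [ee|[x' [hx' [h' ee]]]]; subst e.
  by apply: Dom => // s; apply: lt_le_trans hlt' (hsw s).
exact: LowS h' hlt'.
Qed.

Definition Jp f := epsilon (inhabits 0) (Char f).

Lemma Jp_spec f : act f -> Char f (Jp f).
Proof. by move=> hf; apply: epsilon_spec; apply: Exist. Qed.

Lemma Jp_eq f t : act f -> Char f t -> Jp f = t.
Proof. by move=> hf h; apply: char_uniq (Jp_spec hf) h. Qed.

Lemma Jp_cst x : X x -> Jp (cst S x) = u x.
Proof.
move=> hx; apply: Jp_eq; first exact: act_cst.
split; first by exists x.
by move=> y hy; apply: Hu_rep.
Qed.



Lemma MonCore f g x : act f -> act g -> X x -> (forall s, u (f s) <= u (g s)) ->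
  (exists w, X w /\ forall s, u w < u (g s)) -> P f (cst S x) -> P g (cst S x).
Proof.
move=> hf hg hx hle [w [hw hwg]] h.
have ho := HA2a hf (act_cst hw) (act_cst hx).
have h1 : 0 <= (1 : Real) <= 1 by rewrite ler01 lexx.
have h' : P (mix 1 f (cst S w)) (cst S x) by rewrite mix1f.
case: (ho 1 h1 h') => e [e0 he].
case: (pick_down ltr01 e0) => t [t0 [t1 te]].
have ht : 0 <= t <= 1 by apply/andP; split; lra.
have hf' := act_mixc hf hw ht.
have hP : P (mix t f (cst S w)) (cst S x) by apply: he => //; apply: absltP; lra.
apply: (Htrans hg hf' (act_cst hx) _ hP).
apply: HA5 => // s; apply/Hu_rep; first by case: hg.
  by case: hf'.
rewrite u_mixc //; have := hle s; have := hwg s; nra.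
Qed.

Lemma MonP f g x : act f -> act g -> X x -> (forall s, u (f s) <= u (g s)) ->
  P f (cst S x) -> P g (cst S x).
Proof.
move=> hf hg hx hle h; have H01 := Hz01; have [hgs hgX] := hg.
case: (simple_argmin u s0 hgs) => sw hsw.
case: (classic (exists w, X w /\ u w < u (g sw))) => [[w [hw hwl]]|hn].
  apply: (MonCore hf hg hx hle _ h); exists w; split => // s.
  exact: lt_le_trans hwl (hsw s).
have hz1g : u (g sw) < u z1.
  rewrite ltNge; apply/negP => hh; apply: hn; exists z0; split => //.
  exact: lt_le_trans H01 hh.
have hx' : X (1/2 *: x + (1 - 1/2) *: z1) by apply: Hconv => //; exact: half01'.
apply/(HA3 hg (act_cst hx) Hz1 half01).
apply: (MonCore (act_mixc hf Hz1 half01') (act_mixc hg Hz1 half01') hx').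
- by move=> s; rewrite !u_mixc //; try exact: half01'; have := hle s; lra.
- exists (g sw); split => // s; rewrite u_mixc //; try exact: half01'.
  by have := hsw s; lra.
- exact/(HA3 hf (act_cst hx) Hz1 half01).
Qed.

Lemma Mon f g : act f -> act g -> (forall s, u (f s) <= u (g s)) -> Jp f <= Jp g.
Proof.
move=> hf hg hle; rewrite leNgt; apply/negP => hlt.
have [[x [hx ex]] hg'] := Jp_spec hg.
have [_ hf'] := Jp_spec hf.
have : P g (cst S x) by apply: (MonP hf hg hx hle); apply/(hf' x hx); rewrite ex.
by move/(hg' x hx); rewrite ex ltxx.
Qed.

Lemma Mon_eq f g : act f -> act g -> (forall s, u (f s) = u (g s)) -> Jp f = Jp g.
Proof.
move=> hf hg he; apply/eqP; rewrite eq_le !Mon // => s; by rewrite he.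
Qed.

Lemma CL f z (c : Real) : act f -> X z -> 0 < c < 1 ->
  Jp (mix c f (cst S z)) = c * Jp f + (1 - c) * u z.
Proof.
move=> hf hz hc.
have hc' : 0 <= c <= 1 by case/andP: hc => ??; apply/andP; split; lra.
have hf' := act_mixc hf hz hc'.
have [[xf [hxf exf]] hcf] := Jp_spec hf.
apply: Jp_eq => //; split.
  exists (c *: xf + (1 - c) *: z); split; first exact: Hconv.
  by rewrite Hu_aff // exf.
move=> x hx; split => [h|hlt].
  rewrite ltNge; apply/negP => hge.
  have hxm : X (c *: xf + (1 - c) *: z) by apply: Hconv.
  have : P (mix c f (cst S z)) (cst S (c *: xf + (1 - c) *: z)).
    by apply: (Low hf' hx hxm h); rewrite Hu_aff // exf.
  move/(HA3 hf (act_cst hxf) hz hc) => /(hcf xf hxf).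
  by rewrite exf ltxx.
case: (classic (exists y0, X y0 /\ u y0 < Jp f)) => [[y0 [hy0 hy0l]]|hn].
  have [y [hy [hyl hyg]]] : exists y, X y /\ u y < Jp f /\ u x <= c * u y + (1 - c) * u z.
    case: (lerP ((u x - (1 - c) * u z) / c) (u y0)) => hL.
      exists y0; split => //; split => //.
      by move: hL; rewrite ler_pdivrMr; [lra | case/andP: hc].
    have : uX ((u x - (1 - c) * u z) / c).
      apply: (uX_between (a := u y0) (b := Jp f)); [by exists y0 | by exists xf |].
      apply/andP; split; first exact: ltW.
      by rewrite ler_pdivrMr; [lra | case/andP: hc].
    case=> y [hy ey]; exists y; split => //; split.
      by rewrite ey ltr_pdivrMr; [lra | case/andP: hc].
    by rewrite ey mulrC divfK; [lra | case/andP: hc => ??; rewrite gt_eqF].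
  have hym : X (c *: y + (1 - c) *: z) by apply: Hconv.
  have : P (mix c f (cst S z)) (cst S (c *: y + (1 - c) *: z)).
    by apply/(HA3 hf (act_cst hy) hz hc); apply/(hcf y hy).
  by move/(Low hf' hym hx); apply; rewrite Hu_aff.
apply: Dom => // s; rewrite u_mixc //.
have hfs : X (f s) by case: hf.
have : Jp f <= u (f s).
  by rewrite leNgt; apply/negP => hh; apply: hn; exists (f s).
case/andP: hc => ??; nra.
Qed.

Lemma Transl f g (dl : Real) : act f -> act g -> (forall s, u (g s) = u (f s) + dl) ->
  Jp g = Jp f + dl.
Proof.
move=> hf hg he.
have hf0 : X (f s0) by case: hf.
have hg0 : X (g s0) by case: hg.
have hu : forall s, u (mix (1/2) f (cst S (g s0)) s) = u (mix (1/2) g (cst S (f s0)) s).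
  move=> s; rewrite !u_mixc //; try exact: half01'.
  by rewrite !he; lra.
have e := Mon_eq (act_mixc hf hg0 half01') (act_mixc hg hf0 half01') hu.
rewrite !CL // in e; try exact: half01.
have := he s0; lra.
Qed.

Lemma Aff1 f g (a b : Real) : act f -> act g -> 0 < a <= 1 ->
  (forall s, u (g s) = a * u (f s) + b) -> Jp g = a * Jp f + b.
Proof.
move=> hf hg /andP [a0 a1] he.
have hf0 : X (f s0) by case: hf.
case: (eqVneq a 1) => [ea|na].
  subst a; rewrite (Transl hf hg (dl := b)) ?mul1r // => s; by rewrite he mul1r.
have ha : 0 < a < 1 by apply/andP; split => //; rewrite lt_neqAle na.
have ha' : 0 <= a <= 1 by apply/andP; split => //; apply: ltW.
have hh := act_mixc hf hf0 ha'.
rewrite (Transl hh hg (dl := b - (1 - a) * u (f s0))).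
  by rewrite CL //; ring.
by move=> s; rewrite u_mixc // he; ring.
Qed.

Lemma Aff f g (a b : Real) : act f -> act g -> 0 < a ->
  (forall s, u (g s) = a * u (f s) + b) -> Jp g = a * Jp f + b.
Proof.
move=> hf hg a0 he.
case: (lerP a 1) => a1; first by apply: Aff1 => //; apply/andP.
have ha : 0 < a^-1 <= 1.
  by apply/andP; split; [rewrite invr_gt0 | rewrite invf_le1 //; apply: ltW].
have := Aff1 (b := - b / a) hg hf ha.
have an : a != 0 by rewrite gt_eqF.
move=> H; rewrite H; first by field.
by move=> s; rewrite he; field.
Qed.

Definition kk (t : Real) : V := t *: z1 + (1 - t) *: z0.
Definition hK (K : Real) (phi : S -> Real) : S -> V := fun s => kk ((phi s + K) / (2 * K)).
Definition Kof (phi : S -> Real) : Real :=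
  epsilon (inhabits 1) (fun K => 0 < K /\ forall s, `|phi s| <= K).
Definition Ip (phi : S -> Real) : Real :=
  (2 * Kof phi / (u z1 - u z0)) * (Jp (hK (Kof phi) phi) - u z0) - Kof phi.

Lemma Kof_spec phi : B0 Sig phi -> 0 < Kof phi /\ forall s, `|phi s| <= Kof phi.
Proof. by move=> h; apply: (epsilon_spec (inhabits 1) (fun K => 0 < K /\ forall s, `|phi s| <= K)); apply: simple_bound h. Qed.

Lemma coef01 (K v : Real) : 0 < K -> `|v| <= K -> 0 <= (v + K) / (2 * K) <= 1.
Proof.
move=> K0; rewrite ler_norml => /andP [h1 h2].
apply/andP; split; first by apply: divr_ge0; lra.
by rewrite ler_pdivrMr; lra.
Qed.

Lemma act_hK K phi : B0 Sig phi -> 0 < K -> (forall s, `|phi s| <= K) -> act (hK K phi).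
Proof.
move=> hphi K0 hb; split.
  exact: (simple_comp HSig (fun v => kk ((v + K) / (2 * K))) hphi).
by move=> s; apply: Hconv => //; apply: coef01.
Qed.

Lemma u_hK K phi s : 0 < K -> `|phi s| <= K ->
  u (hK K phi s) = u z0 + (phi s + K) / (2 * K) * (u z1 - u z0).
Proof. by move=> K0 hb; rewrite /hK /kk Hu_aff //; [ring | apply: coef01]. Qed.

Lemma IpRep phi f (a b : Real) : B0 Sig phi -> act f -> 0 < a ->
  (forall s, phi s = a * u (f s) + b) -> Ip phi = a * Jp f + b.
Proof.
move=> hphi hf a0 he; have H01 := Hz01.
have [K0 hb] := Kof_spec hphi.
have hh := act_hK hphi K0 hb.
have d0 : 0 < u z1 - u z0 by rewrite subr_gt0.
have hpos : 0 < a * (u z1 - u z0) / (2 * Kof phi).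
  by apply: divr_gt0; [apply: mulr_gt0 | apply: mulr_gt0].
rewrite /Ip (Aff (b := u z0 + (b + Kof phi) / (2 * Kof phi) * (u z1 - u z0)) hf hh hpos).
  by field; apply/andP; split; rewrite gt_eqF // ?mulr_gt0 // subr_gt0.
move=> s; rewrite u_hK // he.
by field; rewrite gt_eqF.
Qed.

Lemma Ip_u f : act f -> Ip (fun s => u (f s)) = Jp f.
Proof.
move=> hf; have hB : B0 Sig (fun s => u (f s)) by apply: simple_comp; case: hf.
by rewrite (IpRep (a := 1) (b := 0) hB hf) ?ltr01 // ?mul1r ?addr0 // => s; rewrite mul1r addr0.
Qed.

Lemma Ip_cl : const_linear Sig Ip.
Proof.
move=> phi a b hphi a0; have H01 := Hz01.
have [K0 hb] := Kof_spec hphi.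
have hh := act_hK hphi K0 hb.
have d0 : 0 < u z1 - u z0 by rewrite subr_gt0.
have hrep : forall s, phi s = (2 * Kof phi / (u z1 - u z0)) * u (hK (Kof phi) phi s)
                             + (- Kof phi - (2 * Kof phi / (u z1 - u z0)) * u z0).
  by move=> s; rewrite u_hK //; field; apply/andP; split; rewrite gt_eqF.
have c0 : 0 < 2 * Kof phi / (u z1 - u z0) by apply: divr_gt0 => //; apply: mulr_gt0.
have hB : B0 Sig (fun s => a * phi s + b) by apply: (simple_comp HSig (fun v => a * v + b) hphi).
rewrite (IpRep hphi hh c0 hrep).
case: (eqVneq a 0) => [->|an].
  have hz := act_cst Hz0.
  have hB0 : B0 Sig (fun s => 0 * phi s + b) by apply: (simple_comp HSig (fun v => 0 * v + b) hphi).
  rewrite (IpRep (a := 1) (b := b - u z0) hB0 hz ltr01) ?Jp_cst //; first by ring.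
  by move=> s; rewrite /cst; ring.
have ap : 0 < a by rewrite lt_neqAle eq_sym an.
rewrite (IpRep (a := a * (2 * Kof phi / (u z1 - u z0)))
  (b := a * (- Kof phi - (2 * Kof phi / (u z1 - u z0)) * u z0) + b) hB hh).
- by ring.
- exact: mulr_gt0.
- by move=> s; rewrite hrep; ring.
Qed.

Lemma Ip_mon : monotonic Sig Ip.
Proof.
move=> phi psi hphi hpsi hle; have H01 := Hz01.
have [K1 hb1] := Kof_spec hphi; have [K2 hb2] := Kof_spec hpsi.
set K := Kof phi + Kof psi.
have K0 : 0 < K by apply: addr_gt0.
have hb1' : forall s, `|phi s| <= K by move=> s; apply: le_trans (hb1 s) _; rewrite lerDl ltW.
have hb2' : forall s, `|psi s| <= K by move=> s; apply: le_trans (hb2 s) _; rewrite lerDr ltW.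
have h1 := act_hK hphi K0 hb1'; have h2 := act_hK hpsi K0 hb2'.
have d0 : 0 < u z1 - u z0 by rewrite subr_gt0.
have c0 : 0 < 2 * K / (u z1 - u z0) by apply: divr_gt0 => //; apply: mulr_gt0.
have hrep : forall phi', (forall s, `|phi' s| <= K) -> forall s,
    phi' s = (2 * K / (u z1 - u z0)) * u (hK K phi' s) + (- K - (2 * K / (u z1 - u z0)) * u z0).
  by move=> phi' hb s; rewrite u_hK //; field; apply/andP; split; rewrite gt_eqF.
rewrite (IpRep hphi h1 c0 (hrep _ hb1')) (IpRep hpsi h2 c0 (hrep _ hb2')).
rewrite lerD2r ler_pM2l //; apply: Mon => // s.
rewrite !u_hK // lerD2l ler_pM2r // ler_pM2r ?lerD2r //.
by rewrite invr_gt0 mulr_gt0.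
Qed.


Lemma Jp_summary :
  (forall f, act f -> Char f (Jp f)) /\ const_linear Sig Ip /\ monotonic Sig Ip /\
  (forall f, act f -> Ip (fun s => u (f s)) = Jp f).
Proof.
split; first by move=> f; apply: Jp_spec.
split; first exact: Ip_cl.
split; first exact: Ip_mon.
exact: Ip_u.
Qed.

End Jp.

Lemma open_equiv (A B : Real -> Prop) : (forall a, 0 <= a <= 1 -> (A a <-> B a)) ->
  open_in_unit B -> open_in_unit A.
Proof.
move=> he hB a ha hA; case: (hB a ha) => [|e [e0 he']]; first exact/he.
by exists e; split => // b hb hbe; apply/he => //; apply: he'.
Qed.

Lemma open_and (A B : Real -> Prop) : open_in_unit A -> open_in_unit B ->
  open_in_unit (fun a => A a /\ B a).
Proof.
move=> hA hB a ha [h1 h2].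
case: (hA a ha h1) => e1 [e10 he1]; case: (hB a ha h2) => e2 [e20 he2].
case: (lerP e1 e2) => hle.
  exists e1; split => // b hb hbe; split; [exact: he1 | apply: he2 => //; exact: lt_le_trans hbe hle].
exists e2; split => // b hb hbe; split; [apply: he1 => //; exact: lt_trans hbe hle | exact: he2].
Qed.

Section Rep.
Variables (S : Type) (Sig : (S -> Prop) -> Prop) (V : lmodType Real) (X : V -> Prop)
  (P : (S -> V) -> (S -> V) -> Prop) (u : V -> Real) (Ip Io : (S -> Real) -> Real).
Hypothesis HSig : is_algebra Sig.
Hypothesis Hconv : convex_set X.
Local Notation act := (is_act Sig X).

Section Gen.
Variable I : (S -> Real) -> Real.
Hypotheses (Hcl : const_linear Sig I) (Hmon : monotonic Sig I).

Lemma I_const b : I (fun _ => b) = b.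
Proof.
have hB0 : B0 Sig (fun _ : S => (0 : Real)) by apply: simple_cst.
have := Hcl (a := 0) b hB0 (lexx 0).
have -> : (fun s : S => 0 * (fun _ : S => 0 : Real) s + b) = (fun _ => b).
  by apply: functional_extensionality => s; rewrite mul0r add0r.
by rewrite mul0r add0r.
Qed.

Lemma I_shift phi psi (c : Real) : B0 Sig phi -> B0 Sig psi ->
  (forall s, phi s <= psi s + c) -> I phi <= I psi + c.
Proof.
move=> h1 h2 hle.
have h3 : B0 Sig (fun s => 1 * psi s + c) by apply: (simple_comp HSig (fun v => 1 * v + c) h2).
have hl : forall s, phi s <= 1 * psi s + c by move=> s; rewrite mul1r.
have := Hmon h3 h1 hl.
by rewrite Hcl ?ler01 // mul1r.
Qed.

Lemma I_mixcont p q (c : Real) : B0 Sig p -> B0 Sig q ->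
  open_in_unit (fun a => c < I (fun s => a * p s + (1 - a) * q s)) /\
  open_in_unit (fun a => I (fun s => a * p s + (1 - a) * q s) < c).
Proof.
move=> hp hq.
have hpq : B0 Sig (fun s => p s - q s) by apply: (simple_comp2 HSig (fun v w => v - w) hp hq).
case: (simple_bound hpq) => K [K0 hK].
have hB : forall a, B0 Sig (fun s => a * p s + (1 - a) * q s).
  by move=> a; apply: (simple_comp2 HSig (fun v w => a * v + (1 - a) * w) hp hq).
have key : forall a b, I (fun s => b * p s + (1 - b) * q s) <=
    I (fun s => a * p s + (1 - a) * q s) + `|b - a| * K.
  move=> a b; apply: I_shift => // s.
  have e : b * p s + (1 - b) * q s = a * p s + (1 - a) * q s + (b - a) * (p s - q s) by ring.
  rewrite e lerD2l; apply: le_trans (ler_norm _) _.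
  by rewrite normrM ler_wpM2l.
split.
- move=> a ha hlt; exists ((I (fun s => a * p s + (1 - a) * q s) - c) / K); split.
    by apply: divr_gt0 => //; rewrite subr_gt0.
  move=> b hb hbe; have := key b a; rewrite distrC.
  move: hbe; rewrite ltr_pdivlMr // => hbe; lra.
- move=> a ha hlt; exists ((c - I (fun s => a * p s + (1 - a) * q s)) / K); split.
    by apply: divr_gt0 => //; rewrite subr_gt0.
  move=> b hb hbe; have := key a b.
  move: hbe; rewrite ltr_pdivlMr // => hbe; lra.
Qed.

End Gen.

Hypotheses (Haff : affine_on X u) (Hnc : nonconstant_on X u).
Hypotheses (Hclp : const_linear Sig Ip) (Hmonp : monotonic Sig Ip).
Hypotheses (Hclo : const_linear Sig Io) (Hmono : monotonic Sig Io).
Hypothesis Hle : forall h, act h -> Ip (fun s => u (h s)) <= Io (fun s => u (h s)).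
Hypothesis Hiff : forall f g, act f -> act g ->
     (P f g <-> (Ip (fun s => u (g s)) < Ip (fun s => u (f s)) /\
                 Io (fun s => u (g s)) < Io (fun s => u (f s)))).

Lemma S_inh : inhabited S.
Proof.
apply: NNPP => hn.
have e : (fun _ : S => (0 : Real)) = (fun _ => 1).
  by apply: functional_extensionality => s; case: hn; constructor.
have := I_const Hclp 1; rewrite -e (I_const Hclp 0) => /eqP; rewrite eq_sym oner_eq0.
done.
Qed.

Lemma act_u h : act h -> B0 Sig (fun s => u (h s)).
Proof. by case=> h1 _; apply: simple_comp. Qed.

Lemma rep_cst x y : X x -> X y -> (P (cst S x) (cst S y) <-> u y < u x).
Proof.
move=> hx hy; rewrite (Hiff (act_cst HSig hx) (act_cst HSig hy)) /cst.
rewrite !(I_const Hclp) !(I_const Hclo); tauto.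
Qed.

Lemma I_between I h : const_linear Sig I -> monotonic Sig I -> act h ->
  uX X u (I (fun s => u (h s))).
Proof.
move=> hcl hmon hh; have [s0] := S_inh; have [hs hX] := hh.
case: (simple_argmin u s0 hs) => sw hsw.
case: (simple_argmax u s0 hs) => sb hsb.
apply: (uX_between Hconv Haff (a := u (h sw)) (b := u (h sb))).
- by exists (h sw).
- by exists (h sb).
apply/andP; split.
  rewrite -(I_const hcl (u (h sw))); apply: hmon => //; [exact: act_u | exact: simple_cst].
rewrite -(I_const hcl (u (h sb))); apply: hmon => //; [exact: simple_cst | exact: act_u].
Qed.

Lemma char_p h : act h -> Char X P u h (Ip (fun s => u (h s))).
Proof.
move=> hh; split; first exact: I_between.
move=> x hx; rewrite (Hiff hh (act_cst HSig hx)) /cst (I_const Hclp) (I_const Hclo).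
have := Hle hh; split; [by case | move=> hlt; split => //; exact: lt_le_trans hlt _].
Qed.

Definition CharO h t := uX X u t /\ forall x, X x -> (P (cst S x) h <-> t < u x).

Lemma charO_uniq h t t' : CharO h t -> CharO h t' -> t = t'.
Proof.
have aux : forall t t', CharO h t -> CharO h t' -> ~ t < t'.
  move=> a b [_ h1] [[x [hx e]] h2] hlt.
  have hh : a < u x by rewrite e.
  by have := (h2 x hx).1 ((h1 x hx).2 hh); rewrite e ltxx.
move=> h1 h2; case: (ltgtP t t') => // hh.
  by case: (aux _ _ h1 h2 hh).
by case: (aux _ _ h2 h1 hh).
Qed.

Lemma char_o h : act h -> CharO h (Io (fun s => u (h s))).
Proof.
move=> hh; split; first exact: I_between.
move=> x hx; rewrite (Hiff (act_cst HSig hx) hh) /cst (I_const Hclp) (I_const Hclo).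
have := Hle hh; split; [by case | move=> hlt; split => //; exact: le_lt_trans _ hlt].
Qed.

Lemma u_mix f g (a : Real) : act f -> act g -> 0 <= a <= 1 ->
  (fun s => u (mix a f g s)) = (fun s => a * u (f s) + (1 - a) * u (g s)).
Proof.
move=> [_ hf] [_ hg] ha; apply: functional_extensionality => s.
by rewrite /mix Haff.
Qed.

Lemma rep_A1 : A1 Sig X P.
Proof.
split.
  move=> f g hf hg /(Hiff hf hg) [h1 h2] /(Hiff hg hf) [h3 h4].
  by have := lt_trans h1 h3; rewrite ltxx.
split.
  move=> f g h hf hg hh /(Hiff hf hg) [h1 h2] /(Hiff hg hh) [h3 h4].
  by apply/(Hiff hf hh); split; [exact: lt_trans h3 h1 | exact: lt_trans h4 h2].
split.
  case: Hnc => x [y [hx [hy ne]]].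
  case: (ltgtP (u x) (u y)) => h //.
    by exists y, x; split => //; split => //; apply/rep_cst.
  by exists x, y; split => //; split => //; apply/rep_cst.
move=> x y z hx hy hz /(rep_cst hx hy) h.
case: (lerP (u x) (u z)) => h'.
  by right; apply/rep_cst => //; exact: lt_le_trans h h'.
by left; apply/rep_cst.
Qed.

Lemma rep_A2 : A2 Sig X P.
Proof.
move=> f g h hf hg hh.
have hpf := act_u hf; have hpg := act_u hg; have hph := act_u hh.
split.
- apply: (open_equiv (B := fun a => (Ip (fun s => u (h s)) < Ip (fun s => a * u (f s) + (1 - a) * u (g s)))
     /\ (Io (fun s => u (h s)) < Io (fun s => a * u (f s) + (1 - a) * u (g s))))).
    move=> a ha; rewrite (Hiff (act_mix HSig Hconv hf hg ha) hh) (u_mix hf hg ha) //.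
  apply: open_and; [exact: (I_mixcont Hclp Hmonp _ hpf hpg).1 | exact: (I_mixcont Hclo Hmono _ hpf hpg).1].
- apply: (open_equiv (B := fun a => (Ip (fun s => a * u (f s) + (1 - a) * u (g s)) < Ip (fun s => u (h s)))
     /\ (Io (fun s => a * u (f s) + (1 - a) * u (g s)) < Io (fun s => u (h s))))).
    move=> a ha; rewrite (Hiff hh (act_mix HSig Hconv hf hg ha)) (u_mix hf hg ha) //.
  apply: open_and; [exact: (I_mixcont Hclp Hmonp _ hpf hpg).2 | exact: (I_mixcont Hclo Hmono _ hpf hpg).2].
Qed.

Lemma rep_A3 : A3 Sig X P.
Proof.
move=> f g x a hf hg hx ha.
have ha' : 0 <= a <= 1 by case/andP: ha => ??; apply/andP; split; lra.
have a0 : 0 <= a by case/andP: ha'.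
have hc := act_cst HSig hx.
rewrite (Hiff hf hg) (Hiff (act_mix HSig Hconv hf hc ha') (act_mix HSig Hconv hg hc ha')).
rewrite !(u_mix _ _ ha') // /cst.
rewrite (Hclp _ (act_u hf) a0) (Hclp _ (act_u hg) a0).
rewrite (Hclo _ (act_u hf) a0) (Hclo _ (act_u hg) a0).
have ap : 0 < a by case/andP: ha.
by rewrite !ltrD2r !ltr_pM2l.
Qed.

Lemma rep_A5 : A5 Sig X P.
Proof.
move=> f g hf hg hs.
have hlt : forall s, u (g s) < u (f s).
  by move=> s; apply/rep_cst => //; [case: hf | case: hg].
have [s0] := S_inh.
have hd : B0 Sig (fun s => u (f s) - u (g s)).
  by apply: (simple_comp2 HSig (fun v w => u v - u w)); [case: hf | case: hg].
case: (simple_argmin id s0 hd) => sm hsm.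
have ep : 0 < u (f sm) - u (g sm) by rewrite subr_gt0.
have hle : forall s, u (g s) <= u (f s) + - (u (f sm) - u (g sm)).
  by move=> s; have := hsm s; rewrite /=; lra.
apply/(Hiff hf hg); split.
  have := I_shift Hclp Hmonp (act_u hg) (act_u hf) hle; lra.
have := I_shift Hclo Hmono (act_u hg) (act_u hf) hle; lra.
Qed.

Lemma rep_A6 : A6 Sig X P.
Proof.
move=> f g hf hg H.
have [[xp [hxp exp]] _] := char_p hf.
have [[xo [hxo exo]] _] := char_o hf.
have lef := Hle hf; have leg := Hle hg.
have inc : forall x, X x -> incomp P f (cst S x) ->
    ~ (u x < Ip (fun s => u (g s)) /\ u x < Io (fun s => u (g s))) /\
    ~ (Ip (fun s => u (g s)) < u x /\ Io (fun s => u (g s)) < u x).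
  move=> x hx hi; have [h1 h2] := H x hx hi.
  rewrite (Hiff hg (act_cst HSig hx)) (Hiff (act_cst HSig hx) hg) /cst !(I_const Hclp) !(I_const Hclo) in h1 h2.
  by split.
have incp : forall x, X x -> Ip (fun s => u (f s)) <= u x <= Io (fun s => u (f s)) ->
    incomp P f (cst S x).
  move=> x hx /andP [l1 l2].
  rewrite /incomp (Hiff hf (act_cst HSig hx)) (Hiff (act_cst HSig hx) hf) /cst !(I_const Hclp) !(I_const Hclo).
  split => [[a b]|[a b]]; lra.
have [p1 p2] := inc xp hxp (incp xp hxp ltac:(rewrite exp lexx; exact: lef)).
have [o1 o2] := inc xo hxo (incp xo hxo ltac:(rewrite exo lexx andbT; exact: lef)).
rewrite exp in p1 p2; rewrite exo in o1 o2.
rewrite /incomp (Hiff hf hg) (Hiff hg hf).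
split => [[a b]|[a b]].
  apply: o2; split; lra.
apply: p1; split; lra.
Qed.

Lemma rep_A7 : A7 Sig X P.
Proof.
move=> f g x y hf hg hx hy [h1 h2] h3 [h4 h5] h6.
rewrite (Hiff hf (act_cst HSig hx)) (Hiff (act_cst HSig hx) hf) /cst !(I_const Hclp) !(I_const Hclo) in h1 h2.
rewrite (Hiff (act_cst HSig hx) hg) /cst !(I_const Hclp) !(I_const Hclo) in h3.
rewrite (Hiff hg (act_cst HSig hy)) (Hiff (act_cst HSig hy) hg) /cst !(I_const Hclp) !(I_const Hclo) in h4 h5.
rewrite (Hiff hf (act_cst HSig hy)) /cst !(I_const Hclp) !(I_const Hclo) in h6.
have lef := Hle hf; have leg := Hle hg.
apply/(Hiff hf hg).
case: h3 => a b; case: h6 => c d.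
split.
  case: (lerP (Ip (fun s => u (g s))) (u y)) => e; first lra.
  by case: h4; split => //; lra.
case: (lerP (u x) (Io (fun s => u (f s)))) => e; first lra.
by case: h2; split => //; lra.
Qed.

End Rep.

Lemma rep_axioms (S : Type) (Sig : (S -> Prop) -> Prop) (V : lmodType Real) (X : V -> Prop)
  (P : (S -> V) -> (S -> V) -> Prop) (u : V -> Real) (Ip Io : (S -> Real) -> Real) :
  is_algebra Sig -> convex_set X -> represents Sig X P u Ip Io ->
  A1 Sig X P /\ A2 Sig X P /\ A3 Sig X P /\ A5 Sig X P /\ A6 Sig X P /\ A7 Sig X P.
Proof.
move=> HSig Hconv [Haff [Hnc [Hclp [Hmonp [Hclo [Hmono [Hle Hiff]]]]]]].
split; first exact: (rep_A1 HSig Hnc Hclp Hclo Hiff).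
split; first exact: (rep_A2 HSig Hconv Haff Hclp Hmonp Hclo Hmono Hiff).
split; first exact: (rep_A3 HSig Hconv Haff Hclp Hclo Hiff).
split; first exact: (rep_A5 HSig Hclp Hmonp Hclo Hmono Hiff).
split; first exact: (rep_A6 HSig Hconv Haff Hclp Hmonp Hclo Hmono Hle Hiff).
exact: (rep_A7 HSig Hclp Hclo Hle Hiff).
Qed.

Lemma uniq_u (S : Type) (Sig : (S -> Prop) -> Prop) (V : lmodType Real) (X : V -> Prop)
  (P : (S -> V) -> (S -> V) -> Prop) (u u' : V -> Real) (Ip Io Ip' Io' : (S -> Real) -> Real) :
  is_algebra Sig -> convex_set X -> represents Sig X P u Ip Io -> represents Sig X P u' Ip' Io' ->
  exists a b : Real, 0 < a /\ forall x, X x -> u' x = a * u x + b.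
Proof.
move=> HSig Hconv [Haff [Hnc [Hclp [Hmonp [Hclo [Hmono [Hle Hiff]]]]]]].
move=> [Haff' [Hnc' [Hclp' [Hmonp' [Hclo' [Hmono' [Hle' Hiff']]]]]]].
have ord : forall x y, X x -> X y -> (u x < u y <-> u' x < u' y).
  move=> x y hx hy; rewrite -(rep_cst HSig Hclp Hclo Hiff hy hx).
  by rewrite (rep_cst HSig Hclp' Hclo' Hiff' hy hx).
have [x0 [x1 [hx0 [hx1 h01]]]] : exists x0 x1, X x0 /\ X x1 /\ u x0 < u x1.
  case: Hnc => x [y [hx [hy ne]]]; case: (ltgtP (u x) (u y)) => h //.
    by exists x, y.
  by exists y, x.
have key := aff_uniq Hconv Haff Haff' ord hx0 hx1 h01.
have h01' : u' x0 < u' x1 by apply/ord.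
exists ((u' x1 - u' x0) / (u x1 - u x0)), (u' x0 - (u' x1 - u' x0) / (u x1 - u x0) * u x0).
split; first by apply: divr_gt0; rewrite subr_gt0.
move=> z hz; rewrite (key z hz); field.
by rewrite subr_eq0 gt_eqF.
Qed.

Lemma uniq_I (S : Type) (Sig : (S -> Prop) -> Prop) (V : lmodType Real) (X : V -> Prop)
  (P : (S -> V) -> (S -> V) -> Prop) (u : V -> Real) (Ip Io Ip' Io' : (S -> Real) -> Real) :
  is_algebra Sig -> convex_set X -> represents Sig X P u Ip Io -> represents Sig X P u Ip' Io' ->
  forall phi, B0 Sig phi -> Ip' phi = Ip phi /\ Io' phi = Io phi.
Proof.
move=> HSig Hconv [Haff [Hnc [Hclp [Hmonp [Hclo [Hmono [Hle Hiff]]]]]]].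
move=> [_ [_ [Hclp' [Hmonp' [Hclo' [Hmono' [Hle' Hiff']]]]]]] phi hphi.
have [x0 [x1 [hx0 [hx1 h01]]]] : exists x0 x1, X x0 /\ X x1 /\ u x0 < u x1.
  case: Hnc => x [y [hx [hy ne]]]; case: (ltgtP (u x) (u y)) => h //.
    by exists x, y.
  by exists y, x.
case: (simple_bound hphi) => K [K0 hb].
have hh := act_hK HSig Hconv hx0 hx1 hphi K0 hb.
set h := hK x0 x1 K phi in hh.
have d0 : 0 < u x1 - u x0 by rewrite subr_gt0.
set c := 2 * K / (u x1 - u x0).
have c0 : 0 <= c by apply: ltW; apply: divr_gt0 => //; apply: mulr_gt0.
have eph : phi = (fun s => c * u (h s) + (- K - c * u x0)).
  apply: functional_extensionality => s; rewrite /h (u_hK Haff hx0 hx1 K0 (hb s)) /c.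
  by field; apply/andP; split; rewrite gt_eqF.
have hB : B0 Sig (fun s => u (h s)) by apply: simple_comp; case: hh.
have ep : Ip' (fun s => u (h s)) = Ip (fun s => u (h s)).
  exact: char_uniq (char_p HSig Hconv Haff Hclp' Hmonp' Hclo' Hle' Hiff' hh)
                   (char_p HSig Hconv Haff Hclp Hmonp Hclo Hle Hiff hh).
have eo : Io' (fun s => u (h s)) = Io (fun s => u (h s)).
  exact: charO_uniq (char_o HSig Hconv Haff Hclp' Hclo' Hmono' Hle' Hiff' hh)
                    (char_o HSig Hconv Haff Hclp Hclo Hmono Hle Hiff hh).
rewrite eph (Hclp' _ _ _ hB c0) (Hclp _ _ _ hB c0) (Hclo' _ _ _ hB c0) (Hclo _ _ _ hB c0) ep eo.
done.
Qed.

Lemma iff_from_char (S : Type) (Sig : (S -> Prop) -> Prop) (V : lmodType Real) (X : V -> Prop)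
  (P : (S -> V) -> (S -> V) -> Prop) (u : V -> Real) (p o : (S -> V) -> Real) :
  is_algebra Sig ->
  (forall f g, is_act Sig X f -> is_act Sig X g -> P f g -> ~ P g f) ->
  (forall f g h, is_act Sig X f -> is_act Sig X g -> is_act Sig X h -> P f g -> P g h -> P f h) ->
  A6 Sig X P -> A7 Sig X P ->
  (forall h, is_act Sig X h -> forall x, X x -> (P h (cst S x) <-> u x < p h)) ->
  (forall h, is_act Sig X h -> forall x, X x -> (P (cst S x) h <-> o h < u x)) ->
  (forall h, is_act Sig X h -> uX X u (p h)) ->
  (forall h, is_act Sig X h -> uX X u (o h)) ->
  (forall h, is_act Sig X h -> p h <= o h) ->
  forall f g, is_act Sig X f -> is_act Sig X g -> (P f g <-> p g < p f /\ o g < o f).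
Proof.
move=> HSig Asym Atr HA6 HA7 CP CO pX oX ple f g hf hg.
have lf := ple f hf; have lg := ple g hg.
split => [H|[l1 l2]].
  have L1 : p g <= p f.
    rewrite leNgt; apply/negP => hlt.
    have [x [hx ex]] := pX f hf.
    have : P f (cst S x).
      by apply: (Atr _ _ _ hf hg (act_cst HSig hx) H); apply/(CP g hg x hx); rewrite ex.
    by move/(CP f hf x hx); rewrite ex ltxx.
  have L2 : o g <= o f.
    rewrite leNgt; apply/negP => hlt.
    have [x [hx ex]] := oX g hg.
    have : P (cst S x) g.
      by apply: (Atr _ _ _ (act_cst HSig hx) hf hg _ H); apply/(CO f hf x hx); rewrite ex.
    by move/(CO g hg x hx); rewrite ex ltxx.
  split.
    rewrite lt_neqAle L1 andbT; apply/eqP => e.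
    have : incomp P g f.
      apply: (HA6 g f hg hf) => x hx [n1 n2]; split.
        by move/(CP f hf x hx) => hh; apply: n1; apply/(CP g hg x hx); rewrite e.
      move/(CO f hf x hx) => hh; apply: n2; apply/(CO g hg x hx).
      rewrite ltNge; apply/negP => hh2; move: hh; rewrite ltNge.
      by move/negP; apply; apply: le_trans hh2 L2.
    by case=> _; apply.
  rewrite lt_neqAle L2 andbT; apply/eqP => e.
  have : incomp P f g.
    apply: (HA6 f g hf hg) => x hx [n1 n2]; split.
      move/(CP g hg x hx) => hh; apply: n1; apply/(CP f hf x hx).
      exact: lt_le_trans hh L1.
    by move/(CO g hg x hx) => hh; apply: n2; apply/(CO f hf x hx); rewrite -e.
  by case=> hn _; apply: hn.
have [xo [hxo exo]] := oX f hf.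
have [yp [hyp eyp]] := pX g hg.
apply: (HA7 f g xo yp hf hg hxo hyp).
- split.
    by move/(CP f hf xo hxo); rewrite exo ltNge lf.
  by move/(CO f hf xo hxo); rewrite exo ltxx.
- by apply/(CO g hg xo hxo); rewrite exo.
- split.
    by move/(CP g hg yp hyp); rewrite eyp ltxx.
  by move/(CO g hg yp hyp); rewrite eyp ltNge lg.
- by apply/(CP f hf yp hyp); rewrite eyp.
Qed.

Unset Implicit Arguments.

Theorem theorem4 (S : Type) (Sig : (S -> Prop) -> Prop) (V : lmodType Real)
  (X : V -> Prop) (P : (S -> V) -> (S -> V) -> Prop) :
  is_algebra Sig -> convex_set X -> non_singleton X ->
  ((A1 Sig X P /\ A2 Sig X P /\ A3 Sig X P /\ A5 Sig X P /\ A6 Sig X P /\ A7 Sig X P)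
   <->
   exists (u : V -> Real) (Ip Io : (S -> Real) -> Real),
     represents Sig X P u Ip Io /\
     (* u is unique up to positive affine transformation *)
     (forall u' Ip' Io', represents Sig X P u' Ip' Io' ->
        exists a b : Real, 0 < a /\ forall x, X x -> u' x = a * u x + b) /\
     (* given u, the pair (Ip, Io) is unique (as functionals on B0) *)
     (forall Ip' Io', represents Sig X P u Ip' Io' ->
        forall phi, B0 Sig phi -> Ip' phi = Ip phi /\ Io' phi = Io phi)).
Proof.
move=> HSig Hconv Hns; split; last first.
  by case=> u [Ip [Io [Hr _]]]; exact: (rep_axioms HSig Hconv Hr).
case=> [[Asym [Atr [[x1 [x0 [hx1 [hx0 H10]]]] Aneg]]] [HA2 [HA3 [HA5 [HA6 HA7]]]]].
have [s0] : inhabited S.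
  apply: NNPP => hn.
  have e : cst S x1 = cst S x0.
    by apply: functional_extensionality => s; case: hn; constructor.
  rewrite e in H10.
  exact: (Asym _ _ (act_cst HSig hx0) (act_cst HSig hx0) H10 H10).
pose R := fun x y => P (cst S x) (cst S y).
have Rasym : forall x y, X x -> X y -> R x y -> ~ R y x.
  by move=> x y hx hy; apply: Asym; apply: act_cst.
have Rtrans : forall x y z, X x -> X y -> X z -> R x y -> R y z -> R x z.
  by move=> x y z hx hy hz; apply: Atr; apply: act_cst.
have Rcont1 : forall x y z, X x -> X y -> X z ->
    open_in_unit (fun a => R (a *: x + (1 - a) *: y) z).
  by move=> x y z hx hy hz; exact: (HA2 _ _ _ (act_cst HSig hx) (act_cst HSig hy) (act_cst HSig hz)).1.
have Rcont2 : forall x y z, X x -> X y -> X z ->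
    open_in_unit (fun a => R z (a *: x + (1 - a) *: y)).
  by move=> x y z hx hy hz; exact: (HA2 _ _ _ (act_cst HSig hx) (act_cst HSig hy) (act_cst HSig hz)).2.
have Rind : forall x y z (a : Real), X x -> X y -> X z -> 0 < a < 1 ->
    (R x y <-> R (a *: x + (1 - a) *: z) (a *: y + (1 - a) *: z)).
  by move=> x y z a hx hy hz ha; exact: (HA3 _ _ _ _ (act_cst HSig hx) (act_cst HSig hy) hz ha).
have [u [Haff [Hrep [u0 u1]]]] := vnm Hconv Rasym Rtrans Aneg Rcont1 Rcont2 Rind hx0 hx1 H10.
have Hz01 : u x0 < u x1 by rewrite u0 u1 ltr01.
have HA2a : forall f g h, is_act Sig X f -> is_act Sig X g -> is_act Sig X h ->
    open_in_unit (fun a => P (mix a f g) h).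
  by move=> f g h hf hg hh; exact: (HA2 f g h hf hg hh).1.
have HA2b : forall f g h, is_act Sig X f -> is_act Sig X g -> is_act Sig X h ->
    open_in_unit (fun a => P h (mix a f g)).
  by move=> f g h hf hg hh; exact: (HA2 f g h hf hg hh).2.
have [CP [clp [monp ip_u]]] :=
  Jp_summary s0 HSig Hconv Asym Atr HA2a HA2b HA3 HA5 Haff Hrep hx0 hx1 Hz01.
pose P' := fun f g => P g f.
pose u' := fun x => - u x.
have Asym' : forall f g, is_act Sig X f -> is_act Sig X g -> P' f g -> ~ P' g f.
  by move=> f g hf hg; apply: Asym.
have Atr' : forall f g h, is_act Sig X f -> is_act Sig X g -> is_act Sig X h ->
    P' f g -> P' g h -> P' f h.
  by move=> f g h hf hg hh h1 h2; apply: (Atr h g f).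
have HA2a' : forall f g h, is_act Sig X f -> is_act Sig X g -> is_act Sig X h ->
    open_in_unit (fun a => P' (mix a f g) h).
  by move=> f g h hf hg hh; exact: (HA2 f g h hf hg hh).2.
have HA2b' : forall f g h, is_act Sig X f -> is_act Sig X g -> is_act Sig X h ->
    open_in_unit (fun a => P' h (mix a f g)).
  by move=> f g h hf hg hh; exact: (HA2 f g h hf hg hh).1.
have HA3' : forall f g x (a : Real), is_act Sig X f -> is_act Sig X g -> X x -> 0 < a < 1 ->
    (P' f g <-> P' (mix a f (cst S x)) (mix a g (cst S x))).
  by move=> f g x a hf hg hx ha; exact: (HA3 g f x a hg hf hx ha).
have HA5' : forall f g, is_act Sig X f -> is_act Sig X g ->
    (forall s, P' (cst S (f s)) (cst S (g s))) -> P' f g.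
  by move=> f g hf hg hs; exact: (HA5 g f hg hf hs).
have Haff' : affine_on X u'.
  by move=> x y a hx hy ha; rewrite /u' Haff //; ring.
have Hrep' : forall x y, X x -> X y -> (P' (cst S x) (cst S y) <-> u' y < u' x).
  by move=> x y hx hy; rewrite /P' /u' ltrN2; apply: Hrep.
have Hz10 : u' x1 < u' x0 by rewrite /u' ltrN2.
have [CO [clo [mono io_u]]] :=
  Jp_summary s0 HSig Hconv Asym' Atr' HA2a' HA2b' HA3' HA5' Haff' Hrep' hx1 hx0 Hz10.
pose Io0 := fun phi : S -> Real => - (Ip X P' u' x1 x0) (fun s => - phi s).
have io_u' : forall h, is_act Sig X h -> Io0 (fun s => u (h s)) = - Jp X P' u' h.
  move=> h hh; rewrite /Io0; congr (- _); exact: (io_u h hh).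
have CPh : forall h, is_act Sig X h -> forall x, X x -> (P h (cst S x) <-> u x < Jp X P u h).
  by move=> h hh; exact: (CP h hh).2.
have COh : forall h, is_act Sig X h -> forall x, X x -> (P (cst S x) h <-> - Jp X P' u' h < u x).
  move=> h hh x hx; have := (CO h hh).2 x hx; rewrite /P' /u' => ->; by rewrite ltrNl.
have pX : forall h, is_act Sig X h -> uX X u (Jp X P u h) by move=> h hh; exact: (CP h hh).1.
have oX : forall h, is_act Sig X h -> uX X u (- Jp X P' u' h).
  move=> h hh; have [x [hx ex]] := (CO h hh).1; exists x; split => //.
  by rewrite -ex /u' opprK.
have ple : forall h, is_act Sig X h -> Jp X P u h <= - Jp X P' u' h.
  move=> h hh; rewrite leNgt; apply/negP => hlt.
  have := uX_between Hconv Haff (oX h hh) (pX h hh)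
    (t := (Jp X P u h - Jp X P' u' h) / 2) ltac:(apply/andP; split; lra).
  case=> x [hx ex].
  have h1 : P h (cst S x) by apply/(CPh h hh x hx); rewrite ex; lra.
  have h2 : P (cst S x) h by apply/(COh h hh x hx); rewrite ex; lra.
  exact: (Asym _ _ hh (act_cst HSig hx) h1 h2).
have Hiff := iff_from_char HSig Asym Atr HA6 HA7 CPh COh pX oX ple.
have Hr : represents Sig X P u (Ip X P u x0 x1) Io0.
  split; first exact: Haff.
  split; first by exists x0, x1; split => //; split => //; rewrite u0 u1; apply/eqP; rewrite eq_sym oner_eq0.
  split; first exact: clp.
  split; first exact: monp.
  split.
    move=> phi a b hphi a0; rewrite /Io0.
    have e : (fun s => - (a * phi s + b)) = (fun s => a * (- phi s) + - b).
      by apply: functional_extensionality => s; ring.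
    have hB : B0 Sig (fun s => - phi s) by apply: (simple_comp HSig (fun v => - v) hphi).
    by rewrite e (clo _ _ _ hB a0); ring.
  split.
    move=> phi psi hphi hpsi hle; rewrite /Io0 lerN2.
    apply: mono.
    - by apply: (simple_comp HSig (fun v => - v) hpsi).
    - by apply: (simple_comp HSig (fun v => - v) hphi).
    - by move=> s; rewrite lerN2.
  split.
    by move=> h hh; rewrite ip_u // io_u'; [exact: ple | done].
  move=> f g hf hg; rewrite !ip_u // !io_u' //; exact: Hiff.
exists u, (Ip X P u x0 x1), Io0; split => //; split.
  by move=> u2 Ip2 Io2 Hr2; exact: (uniq_u HSig Hconv Hr Hr2).
by move=> Ip2 Io2 Hr2; exact: (uniq_I HSig Hconv Hr Hr2).
Qed.
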